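(* There exist constants $C\ge2$, $K$ and $M$ such that for all integers $k,k'$ with $K\le k<k'\le2k$, every $t_1\ge0$ and every $c_1>0$, setting $c=e^{-k/2+5k'/6}$ and defining $c_2>0$ by $c_1\,c\,e^{-kt_1}=c_2e^{-k't_1}$, one can transform $c_1\cos(kx)e^{-kt}$ into $c_2\cos(k'y)e^{-k't}$ within $\mathbb{T}^2\times[t_1,t_1+C]$ via a solution $u$ of $\ddot u+\operatorname{div}(A\nabla u)=0$ with $A$ in the regularity class $R(80,60)$. Moreover, on $[t_1,t_1+C]$, $u=f(t)\cos(kx)+g(t)\cos(k'y)$ with $f,g\in C^2$ satisfying, for $0\le\alpha\le2$, $$|f^{(\alpha)}(t)|\le Mc_1k^{7\alpha/3}e^{-kt},\qquad |g^{(\alpha)}(t)|\le Mc_2(k')^\alpha e^{-k't/3}e^{-2k't_1/3};$$ on $[t_1,t_1+\frac1{100}]$, $u=c_1\cos(kx)e^{-kt}$ and $A=\mathrm{Id}$; and on $[t_1+C-\frac1{100},t_1+C]$, $u=c_2\cos(k'y)e^{-k't}$ and $A=\mathrm{Id}$.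
   Context: $\mathbb{T}^2=(\mathbb{R}/2\pi\mathbb{Z})^2$ with coordinates $(x,y)$; $t$ the third coordinate. $\ddot u+\operatorname{div}(A\nabla u)$ means $\partial_t^2u+\sum_{i,j\in\{x,y\}}\partial_i(A_{ij}\partial_ju)$ for a real $2\times2$ matrix function $A$. ''Transform $u_1$ into $u_2$ within $\mathbb{T}^2\times[T_1,T_2]$ via $u$'' means: $u$ is $C^2$, $A$ is $C^1$, $\ddot u+\operatorname{div}(A\nabla u)=0$ on $\mathbb{T}^2\times\mathbb{R}$, $u=u_1$ and $A=\mathrm{Id}$ (the equation solved by $u_1$) for $t\le T_1$, and $u=u_2$, $A=\mathrm{Id}$ for $t\ge T_2$. Regularity class $R(\Lambda,C)$: $\Lambda^{-1}|\xi|^2\le\xi^TA\xi\le\Lambda|\xi|^2$ for all $\xi\in\mathbb{R}^2$ at every point, and the entries of $A$ are $C^1$ with all first partial derivatives in $x,y,t$ bounded by $C$ in absolute value. *)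

(* Defs.v *)
From Stdlib Require Import Reals.
From Coquelicot Require Import Coquelicot.
Open Scope R_scope.

(* Scalar fields on T^2 x R, written as functions of (x, y, t) : R^3,
   required to be 2*pi-periodic in x and y. *)
Definition field3 := R -> R -> R -> R.

Definition periodic_xy (f : field3) : Prop :=
  forall x y t, f (x + 2 * PI) y t = f x y t /\ f x (y + 2 * PI) t = f x y t.

Definition dx (f : field3) : field3 := fun x y t => Derive (fun x' => f x' y t) x.
Definition dy (f : field3) : field3 := fun x y t => Derive (fun y' => f x y' t) y.
Definition dt (f : field3) : field3 := fun x y t => Derive (fun t' => f x y t') t.

Definition cont3 (f : field3) : Prop :=
  forall p : R * R * R,
    continuous (fun q : R * R * R => f (fst (fst q)) (snd (fst q)) (snd q)) p.

Definition C1_3 (f : field3) : Prop :=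
  (forall x y t, ex_derive (fun x' => f x' y t) x /\
                 ex_derive (fun y' => f x y' t) y /\
                 ex_derive (fun t' => f x y t') t) /\
  cont3 f /\ cont3 (dx f) /\ cont3 (dy f) /\ cont3 (dt f).

Definition C2_3 (f : field3) : Prop :=
  C1_3 f /\ C1_3 (dx f) /\ C1_3 (dy f) /\ C1_3 (dt f).

Record matfield := MatField {
  a11 : field3; a12 : field3; a21 : field3; a22 : field3 }.

Definition mat_periodic (A : matfield) : Prop :=
  periodic_xy (a11 A) /\ periodic_xy (a12 A) /\
  periodic_xy (a21 A) /\ periodic_xy (a22 A).

Definition mat_C1 (A : matfield) : Prop :=
  C1_3 (a11 A) /\ C1_3 (a12 A) /\ C1_3 (a21 A) /\ C1_3 (a22 A).

Definition is_Id_at (A : matfield) (x y t : R) : Prop :=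
  a11 A x y t = 1 /\ a12 A x y t = 0 /\ a21 A x y t = 0 /\ a22 A x y t = 1.

Definition solves_eq (A : matfield) (u : field3) : Prop :=
  forall x y t,
    dt (dt u) x y t
    + dx (fun x y t => a11 A x y t * dx u x y t + a12 A x y t * dy u x y t) x y t
    + dy (fun x y t => a21 A x y t * dx u x y t + a22 A x y t * dy u x y t) x y t
    = 0.

(* "transform u1 into u2 within T^2 x [T1,T2] via u (with coefficient A)",
   where u1, u2 solve the equation with A = Id. *)
Definition transforms (u1 u2 : field3) (T1 T2 : R) (A : matfield) (u : field3) : Prop :=
  periodic_xy u /\ mat_periodic A /\
  C2_3 u /\ mat_C1 A /\ solves_eq A u /\
  (forall x y t, t <= T1 -> u x y t = u1 x y t /\ is_Id_at A x y t) /\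
  (forall x y t, T2 <= t -> u x y t = u2 x y t /\ is_Id_at A x y t).

Definition quad (A : matfield) (x y t xi1 xi2 : R) : R :=
  xi1 * (a11 A x y t * xi1 + a12 A x y t * xi2)
  + xi2 * (a21 A x y t * xi1 + a22 A x y t * xi2).

Definition bounded_partials (f : field3) (Cb : R) : Prop :=
  forall x y t, Rabs (dx f x y t) <= Cb /\ Rabs (dy f x y t) <= Cb /\
                Rabs (dt f x y t) <= Cb.

Definition reg_class (Lam Cb : R) (A : matfield) : Prop :=
  (forall x y t xi1 xi2,
      / Lam * (xi1 ^ 2 + xi2 ^ 2) <= quad A x y t xi1 xi2 /\
      quad A x y t xi1 xi2 <= Lam * (xi1 ^ 2 + xi2 ^ 2)) /\
  mat_C1 A /\
  bounded_partials (a11 A) Cb /\ bounded_partials (a12 A) Cb /\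
  bounded_partials (a21 A) Cb /\ bounded_partials (a22 A) Cb.

Definition C2_1 (f : R -> R) : Prop :=
  (forall t, ex_derive f t) /\ (forall t, ex_derive (Derive f) t) /\
  (forall t, continuous (Derive_n f 2) t).

(* Main.v *)
Require Import Defs.
From Stdlib Require Import Reals Lra Psatz ZArith.
From Coquelicot Require Import Coquelicot.
Open Scope R_scope.


Lemma locally_lt (x a : R) : x < a -> locally x (fun y => y < a).
Proof.
  intros H. assert (Hp : 0 < a - x) by lra.
  exists (mkposreal _ Hp). intros y Hy. simpl in Hy.
  unfold ball in Hy; simpl in Hy; unfold AbsRing_ball in Hy; simpl in Hy.
  unfold abs, minus, plus, opp in Hy; simpl in Hy.
  apply Rabs_def2 in Hy. lra.
Qed.

Lemma locally_gt (x a : R) : a < x -> locally x (fun y => a < y).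
Proof.
  intros H. assert (Hp : 0 < x - a) by lra.
  exists (mkposreal _ Hp). intros y Hy. simpl in Hy.
  unfold ball in Hy; simpl in Hy; unfold AbsRing_ball in Hy; simpl in Hy.
  unfold abs, minus, plus, opp in Hy; simpl in Hy.
  apply Rabs_def2 in Hy. lra.
Qed.

Lemma ec_derive (f1 f2 d1 d2 : R -> R) (a : R) :
  (forall x, is_derive f1 x (d1 x)) -> (forall x, is_derive f2 x (d2 x)) ->
  f1 a = f2 a -> d1 a = d2 a ->
  forall x, is_derive (extension_cont f1 f2 a) x (extension_cont d1 d2 a x).
Proof.
  intros H1 H2 E0 E1 x.
  destruct (Rtotal_order x a) as [Hx|[Hx|Hx]].
  - apply is_derive_ext_loc with f1.
    + generalize (locally_lt x a Hx). apply filter_imp. intros y Hy.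
      unfold extension_cont. destruct (Rle_dec y a); [reflexivity| lra].
    + unfold extension_cont. destruct (Rle_dec x a); [apply H1| lra].
  - subst x. unfold extension_cont at 2. destruct (Rle_dec a a); [|lra].
    apply extension_cont_is_derive; auto. rewrite E1; auto.
  - apply is_derive_ext_loc with f2.
    + generalize (locally_gt x a Hx). apply filter_imp. intros y Hy.
      unfold extension_cont. destruct (Rle_dec y a); [lra| reflexivity].
    + unfold extension_cont. destruct (Rle_dec x a); [lra| apply H2].
Qed.

Lemma ec_cont (f1 f2 : R -> R) (a : R) :
  (forall x, continuous f1 x) -> (forall x, continuous f2 x) ->
  f1 a = f2 a -> forall x, continuous (extension_cont f1 f2 a) x.
Proof.
  intros H1 H2 E0 x.
  destruct (Rtotal_order x a) as [Hx|[Hx|Hx]].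
  - apply continuous_ext_loc with f1.
    + generalize (locally_lt x a Hx). apply filter_imp. intros y Hy.
      unfold extension_cont. destruct (Rle_dec y a); [reflexivity| lra].
    + unfold extension_cont. destruct (Rle_dec x a); [apply H1| lra].
  - subst x. apply extension_cont_continuous; auto.
  - apply continuous_ext_loc with f2.
    + generalize (locally_gt x a Hx). apply filter_imp. intros y Hy.
      unfold extension_cont. destruct (Rle_dec y a); [lra| reflexivity].
    + unfold extension_cont. destruct (Rle_dec x a); [lra| apply H2].
Qed.


Definition pw (l p r : R -> R) (x : R) : R :=
  extension_cont l (extension_cont p r 1) 0 x.

Lemma pw_derive (l p r dl dp dr : R -> R) :
  (forall x, is_derive l x (dl x)) -> (forall x, is_derive p x (dp x)) ->
  (forall x, is_derive r x (dr x)) ->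
  l 0 = p 0 -> dl 0 = dp 0 -> p 1 = r 1 -> dp 1 = dr 1 ->
  forall x, is_derive (pw l p r) x (pw dl dp dr x).
Proof.
  intros Hl Hp Hr E1 E2 E3 E4 x. unfold pw.
  apply ec_derive; auto.
  - apply ec_derive; auto.
  - unfold extension_cont. destruct (Rle_dec 0 1); [auto|lra].
  - unfold extension_cont. destruct (Rle_dec 0 1); [auto|lra].
Qed.

Lemma pw_cont (l p r : R -> R) :
  (forall x, continuous l x) -> (forall x, continuous p x) ->
  (forall x, continuous r x) ->
  l 0 = p 0 -> p 1 = r 1 -> forall x, continuous (pw l p r) x.
Proof.
  intros Hl Hp Hr E1 E3 x. unfold pw.
  apply ec_cont; auto.
  - apply ec_cont; auto.
  - unfold extension_cont. destruct (Rle_dec 0 1); [auto|lra].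
Qed.

Lemma pw_le0 l p r x : x <= 0 -> pw l p r x = l x.
Proof. intros H. unfold pw, extension_cont. destruct (Rle_dec x 0); [auto|lra]. Qed.
Lemma pw_ge1 l p r x : p 1 = r 1 -> 1 <= x -> pw l p r x = r x.
Proof. intros E H. unfold pw, extension_cont. destruct (Rle_dec x 0); [lra|].
  destruct (Rle_dec x 1); [|auto]. assert (x = 1) by lra. subst. auto. Qed.
Lemma pw_mid l p r x : 0 < x <= 1 -> pw l p r x = p x.
Proof. intros H. unfold pw, extension_cont. destruct (Rle_dec x 0); [lra|].
  destruct (Rle_dec x 1); [auto|lra]. Qed.
Lemma pw_mid' l p r x : l 0 = p 0 -> 0 <= x <= 1 -> pw l p r x = p x.
Proof. intros E H. destruct (Req_dec x 0). subst. rewrite pw_le0; auto; lra.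
  apply pw_mid; lra. Qed.

Definition P0 x := 35*x^4 - 84*x^5 + 70*x^6 - 20*x^7.
Definition P1 x := 140*x^3 - 420*x^4 + 420*x^5 - 140*x^6.
Definition P2 x := 420*x^2 - 1680*x^3 + 2100*x^4 - 840*x^5.
Definition P3 x := 840*x - 5040*x^2 + 8400*x^3 - 4200*x^4.
Definition PQ x := 7*x^5 - 14*x^6 + 10*x^7 - 5/2*x^8.
Definition z0 (x : R) := 0.
Definition o1 (x : R) := 1.
Definition Sg := pw z0 P0 o1.
Definition S1 := pw z0 P1 z0.
Definition S2 := pw z0 P2 z0.
Definition S3 := pw z0 P3 z0.
Definition Sig := pw z0 PQ (fun x => x - 1/2).

Lemma z0_d x : is_derive z0 x (z0 x).
Proof. unfold z0. auto_derive; auto. Qed.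
Lemma o1_d x : is_derive o1 x (z0 x).
Proof. unfold z0, o1. auto_derive; auto. Qed.

Lemma Sig_d x : is_derive Sig x (Sg x).
Proof. unfold Sig, Sg. apply pw_derive with (l := z0) (p := PQ) (r := fun x => x - 1/2).
  - apply z0_d.
  - intros y. unfold PQ, P0. auto_derive; auto. field.
  - intros y. unfold o1. auto_derive; auto.
  - unfold z0, PQ; ring. - unfold z0, P0; ring. - unfold PQ; cbv beta; field. - unfold P0,o1; ring.
Qed.
Lemma Sg_d x : is_derive Sg x (S1 x).
Proof. unfold S1, Sg. apply pw_derive.
  - apply z0_d.
  - intros y. unfold P1, P0. auto_derive; auto. ring.
  - apply o1_d.
  - unfold z0, P0; ring. - unfold z0, P1; ring. - unfold P0, o1; ring. - unfold P1,z0; ring.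
Qed.
Lemma S1_d x : is_derive S1 x (S2 x).
Proof. unfold S1, S2. apply pw_derive.
  - apply z0_d.
  - intros y. unfold P1, P2. auto_derive; auto. ring.
  - apply z0_d.
  - unfold z0, P1; ring. - unfold z0, P2; ring. - unfold P1, z0; ring. - unfold P2,z0; ring.
Qed.
Lemma S2_d x : is_derive S2 x (S3 x).
Proof. unfold S3, S2. apply pw_derive.
  - apply z0_d.
  - intros y. unfold P3, P2. auto_derive; auto. ring.
  - apply z0_d.
  - unfold z0, P2; ring. - unfold z0, P3; ring. - unfold P2, z0; ring. - unfold P3,z0; ring.
Qed.
Lemma cont_of_derive (f : R -> R) (df x : R) : is_derive f x df -> continuous f x.
Proof. intros H. apply (ex_derive_continuous (K:=R_AbsRing) (V:=R_NormedModule)).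
  exists df. exact H. Qed.

Lemma S3_c x : continuous S3 x.
Proof. unfold S3. apply pw_cont.
  - intros; apply continuous_const.
  - intros y. eapply cont_of_derive. unfold P3. auto_derive; auto.
  - intros; apply continuous_const.
  - unfold z0, P3; ring. - unfold z0, P3; ring.
Qed.

Lemma Sg_le0 x : x <= 0 -> Sg x = 0.
Proof. intros; unfold Sg; rewrite pw_le0; auto. Qed.
Lemma Sg_ge1 x : 1 <= x -> Sg x = 1.
Proof. intros; unfold Sg; rewrite pw_ge1; auto. unfold P0, o1; ring. Qed.
Lemma S1_out x : x <= 0 \/ 1 <= x -> S1 x = 0.
Proof. intros [H|H]; unfold S1; [rewrite pw_le0 | rewrite pw_ge1]; auto. unfold P1, z0; ring. Qed.
Lemma S2_out x : x <= 0 \/ 1 <= x -> S2 x = 0.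
Proof. intros [H|H]; unfold S2; [rewrite pw_le0 | rewrite pw_ge1]; auto. unfold P2, z0; ring. Qed.
Lemma S3_out x : x <= 0 \/ 1 <= x -> S3 x = 0.
Proof. intros [H|H]; unfold S3; [rewrite pw_le0 | rewrite pw_ge1]; auto. unfold P3, z0; ring. Qed.
Lemma Sig_le0 x : x <= 0 -> Sig x = 0.
Proof. intros; unfold Sig; rewrite pw_le0; auto. Qed.
Lemma Sig_ge1 x : 1 <= x -> Sig x = x - 1/2.
Proof. intros; unfold Sig; rewrite pw_ge1; auto. unfold PQ; field. Qed.

Lemma Sg_bnd x : 0 <= Sg x <= 1.
Proof.
  destruct (Rle_dec x 0). rewrite Sg_le0; lra.
  destruct (Rle_dec 1 x). rewrite Sg_ge1; lra.
  unfold Sg; rewrite pw_mid by lra. unfold P0.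
  assert (E: 1 - (35*x^4 - 84*x^5 + 70*x^6 - 20*x^7) = (1-x)^4*(1+4*x+10*x^2+20*x^3)) by ring.
  assert (0 <= x^4) by (apply pow_le; lra).
  assert (0 <= (1-x)^4) by (apply pow_le; lra).
  split.
  - replace (35*x^4 - 84*x^5 + 70*x^6 - 20*x^7) with (x^4*(35 - 84*x + 70*x^2 - 20*x^3)) by ring.
    apply Rmult_le_pos; auto. nra.
  - assert (0 <= (1-x)^4*(1+4*x+10*x^2+20*x^3)) by (apply Rmult_le_pos; nra). lra.
Qed.

Lemma S1_bnd x : 0 <= S1 x <= 3.
Proof.
  destruct (Rle_dec x 0). rewrite S1_out; lra.
  destruct (Rle_dec 1 x). rewrite S1_out; lra.
  unfold S1; rewrite pw_mid by lra. unfold P1.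
  replace (140*x^3 - 420*x^4 + 420*x^5 - 140*x^6) with (140*(x*(1-x))^3) by ring.
  assert (0 <= x*(1-x) <= 1/4) by (pose proof (pow2_ge_0 (x - 1/2)); split; nra).
  set (u := x*(1-x)) in *.
  assert (0 <= u^3 <= (1/4)^3). { split. apply pow_le; lra. apply pow_incr; lra. }
  lra.
Qed.

Lemma S2_bnd x : Rabs (S2 x) <= 30.
Proof.
  destruct (Rle_dec x 0). rewrite S2_out; [rewrite Rabs_R0|]; lra.
  destruct (Rle_dec 1 x). rewrite S2_out; [rewrite Rabs_R0|]; lra.
  unfold S2; rewrite pw_mid by lra. unfold P2.
  replace (420*x^2 - 1680*x^3 + 2100*x^4 - 840*x^5) with (420*(x*(1-x))^2*(1-2*x)) by ring.
  assert (0 <= x*(1-x) <= 1/4) by (pose proof (pow2_ge_0 (x - 1/2)); split; nra).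
  set (u := x*(1-x)) in *.
  assert (0 <= u^2 <= (1/4)^2). { split. apply pow_le; lra. apply pow_incr; lra. }
  apply Rabs_le. split; nra.
Qed.

Lemma S3_bnd x : Rabs (S3 x) <= 20000.
Proof.
  destruct (Rle_dec x 0). rewrite S3_out; [rewrite Rabs_R0|]; lra.
  destruct (Rle_dec 1 x). rewrite S3_out; [rewrite Rabs_R0|]; lra.
  unfold S3; rewrite pw_mid by lra. unfold P3. apply Rabs_le.
  assert (0 <= x^2 <= 1) by (split; nra).
  assert (0 <= x^3 <= 1) by (split; nra).
  assert (0 <= x^4 <= 1) by (split; nra). lra.
Qed.


Lemma ex_of (f : R -> R) x l : is_derive f x l -> ex_derive f x.
Proof. intros H; exists l; exact H. Qed.

Lemma ex_Sg x : ex_derive Sg x. Proof. eapply ex_of; apply Sg_d. Qed.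
Lemma ex_S1 x : ex_derive S1 x. Proof. eapply ex_of; apply S1_d. Qed.
Lemma ex_S2 x : ex_derive S2 x. Proof. eapply ex_of; apply S2_d. Qed.
Lemma ex_Sig x : ex_derive Sig x. Proof. eapply ex_of; apply Sig_d. Qed.
Lemma D_Sg x : Derive Sg x = S1 x. Proof. apply is_derive_unique; apply Sg_d. Qed.
Lemma D_S1 x : Derive S1 x = S2 x. Proof. apply is_derive_unique; apply S1_d. Qed.
Lemma D_S2 x : Derive S2 x = S3 x. Proof. apply is_derive_unique; apply S2_d. Qed.
Lemma D_Sig x : Derive Sig x = Sg x. Proof. apply is_derive_unique; apply Sig_d. Qed.
Global Hint Resolve ex_Sg ex_S1 ex_S2 ex_Sig : exd.

Definition nu kr kp := 37/30*kp - kr/4.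
Definition al kr kp := nu kr kp - kr.
Definition be kr kp := kp - nu kr kp.
Definition Ph kr kp t1 t := kr*t + al kr kp * Sig (t - t1 - 5) + be kr kp * Sig (t - t1 - 25).
Definition Ph1 kr kp t1 t := kr + al kr kp * Sg (t - t1 - 5) + be kr kp * Sg (t - t1 - 25).
Definition Ph2 kr kp t1 t := al kr kp * S1 (t - t1 - 5) + be kr kp * S1 (t - t1 - 25).
Definition Ph3 kr kp t1 t := al kr kp * S2 (t - t1 - 5) + be kr kp * S2 (t - t1 - 25).
Definition th t1 t := PI/2 * Sg (t - t1 - 3).
Definition th1 t1 t := PI/2 * S1 (t - t1 - 3).
Definition th2 t1 t := PI/2 * S2 (t - t1 - 3).
Definition th3 t1 t := PI/2 * S3 (t - t1 - 3).

Ltac dsolve := auto_derive; [repeat split; auto with exd | rewrite ?D_Sg, ?D_S1, ?D_S2, ?D_Sig; unfold Rminus; ring].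

Lemma Ph_d kr kp t1 t : is_derive (Ph kr kp t1) t (Ph1 kr kp t1 t).
Proof. unfold Ph, Ph1. dsolve. Qed.
Lemma Ph1_d kr kp t1 t : is_derive (Ph1 kr kp t1) t (Ph2 kr kp t1 t).
Proof. unfold Ph1, Ph2. dsolve. Qed.
Lemma Ph2_d kr kp t1 t : is_derive (Ph2 kr kp t1) t (Ph3 kr kp t1 t).
Proof. unfold Ph3, Ph2. dsolve. Qed.
Lemma th_d t1 t : is_derive (th t1) t (th1 t1 t).
Proof. unfold th, th1. dsolve. Qed.
Lemma th1_d t1 t : is_derive (th1 t1) t (th2 t1 t).
Proof. unfold th2, th1. dsolve. Qed.
Lemma th2_d t1 t : is_derive (th2 t1) t (th3 t1 t).
Proof. unfold th2, th3. dsolve. Qed.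

Lemma ex_Ph kr kp t1 t : ex_derive (Ph kr kp t1) t. Proof. eapply ex_of; apply Ph_d. Qed.
Lemma ex_Ph1 kr kp t1 t : ex_derive (Ph1 kr kp t1) t. Proof. eapply ex_of; apply Ph1_d. Qed.
Lemma ex_Ph2 kr kp t1 t : ex_derive (Ph2 kr kp t1) t. Proof. eapply ex_of; apply Ph2_d. Qed.
Lemma ex_th t1 t : ex_derive (th t1) t. Proof. eapply ex_of; apply th_d. Qed.
Lemma ex_th1 t1 t : ex_derive (th1 t1) t. Proof. eapply ex_of; apply th1_d. Qed.
Lemma ex_th2 t1 t : ex_derive (th2 t1) t. Proof. eapply ex_of; apply th2_d. Qed.
Lemma D_Ph kr kp t1 t : Derive (Ph kr kp t1) t = Ph1 kr kp t1 t. Proof. apply is_derive_unique; apply Ph_d. Qed.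
Lemma D_Ph1 kr kp t1 t : Derive (Ph1 kr kp t1) t = Ph2 kr kp t1 t. Proof. apply is_derive_unique; apply Ph1_d. Qed.
Lemma D_Ph2 kr kp t1 t : Derive (Ph2 kr kp t1) t = Ph3 kr kp t1 t. Proof. apply is_derive_unique; apply Ph2_d. Qed.
Lemma D_th t1 t : Derive (th t1) t = th1 t1 t. Proof. apply is_derive_unique; apply th_d. Qed.
Lemma D_th1 t1 t : Derive (th1 t1) t = th2 t1 t. Proof. apply is_derive_unique; apply th1_d. Qed.
Lemma D_th2 t1 t : Derive (th2 t1) t = th3 t1 t. Proof. apply is_derive_unique; apply th2_d. Qed.
Global Hint Resolve ex_Ph ex_Ph1 ex_Ph2 ex_th ex_th1 ex_th2 : exd.

Ltac dsolve2 := auto_derive; [repeat split; auto with exd | rewrite ?D_Ph, ?D_Ph1, ?D_Ph2, ?D_th, ?D_th1, ?D_th2, ?D_Sg, ?D_S1, ?D_S2, ?D_Sig; unfold Rminus; ring].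

Definition Qf kr kp t1 t := Ph1 kr kp t1 t ^ 2 - Ph2 kr kp t1 t - th1 t1 t ^ 2.
Definition Wt kr kp t1 t := 2 * Ph1 kr kp t1 t * th1 t1 t - th2 t1 t.
Definition ff c1 kr kp t1 t := c1 * exp (- Ph kr kp t1 t) * cos (th t1 t).
Definition gg c1 kr kp t1 t := c1 * exp (- Ph kr kp t1 t) * sin (th t1 t).
Definition ff1 c1 kr kp t1 t := c1 * exp (- Ph kr kp t1 t) *
   (- Ph1 kr kp t1 t * cos (th t1 t) - th1 t1 t * sin (th t1 t)).
Definition gg1 c1 kr kp t1 t := c1 * exp (- Ph kr kp t1 t) *
   (- Ph1 kr kp t1 t * sin (th t1 t) + th1 t1 t * cos (th t1 t)).
Definition ff2 c1 kr kp t1 t := Qf kr kp t1 t * ff c1 kr kp t1 t + Wt kr kp t1 t * gg c1 kr kp t1 t.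
Definition gg2 c1 kr kp t1 t := Qf kr kp t1 t * gg c1 kr kp t1 t - Wt kr kp t1 t * ff c1 kr kp t1 t.

Lemma ff_d c1 kr kp t1 t : is_derive (ff c1 kr kp t1) t (ff1 c1 kr kp t1 t).
Proof. unfold ff, ff1. dsolve2. Qed.
Lemma gg_d c1 kr kp t1 t : is_derive (gg c1 kr kp t1) t (gg1 c1 kr kp t1 t).
Proof. unfold gg, gg1. dsolve2. Qed.
Lemma ff1_d c1 kr kp t1 t : is_derive (ff1 c1 kr kp t1) t (ff2 c1 kr kp t1 t).
Proof. unfold ff2, ff1, Qf, Wt, ff, gg. dsolve2. Qed.
Lemma gg1_d c1 kr kp t1 t : is_derive (gg1 c1 kr kp t1) t (gg2 c1 kr kp t1 t).
Proof. unfold gg2, gg1, Qf, Wt, ff, gg. dsolve2. Qed.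

Definition WW kr t1 t := 2 * kr * th1 t1 t - th2 t1 t.
Definition WW1 kr t1 t := 2 * kr * th2 t1 t - th3 t1 t.
Definition a0 kr t1 t := 1 - th1 t1 t ^ 2 / kr ^ 2.
Definition a01 kr t1 t := - (2 * th1 t1 t * th2 t1 t) / kr ^ 2.
Definition d0 kr kp t1 t := 1 + (kr^2/kp^2 - 1) * Sg (t - t1 - 1) + (Qf kr kp t1 t - kr^2) / kp^2.
Definition d01 kr kp t1 t := (kr^2/kp^2 - 1) * S1 (t - t1 - 1) +
  (2 * Ph1 kr kp t1 t * Ph2 kr kp t1 t - Ph3 kr kp t1 t - 2 * th1 t1 t * th2 t1 t) / kp^2.

Lemma WW_d kr t1 t : is_derive (WW kr t1) t (WW1 kr t1 t).
Proof. unfold WW, WW1. dsolve2. Qed.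
Lemma a0_d kr t1 t : kr <> 0 -> is_derive (a0 kr t1) t (a01 kr t1 t).
Proof. intros. unfold a0, a01. auto_derive; [repeat split; auto with exd|].
  rewrite ?D_th1. field. auto. Qed.
Lemma d0_d kr kp t1 t : kp <> 0 -> is_derive (d0 kr kp t1) t (d01 kr kp t1 t).
Proof. intros. unfold d0, d01, Qf. auto_derive; [repeat split; auto with exd|].
  rewrite ?D_Ph, ?D_Ph1, ?D_Ph2, ?D_th, ?D_th1, ?D_th2, ?D_Sg. unfold Rminus. field. auto. Qed.


Lemma c_plus (f g : R -> R) x : continuous f x -> continuous g x -> continuous (fun x => f x + g x) x.
Proof. intros. apply (continuous_plus (V := R_NormedModule) f g); auto. Qed.
Lemma c_mult (f g : R -> R) x : continuous f x -> continuous g x -> continuous (fun x => f x * g x) x.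
Proof. intros. apply (continuous_mult (K := R_AbsRing) f g); auto. Qed.

Lemma cont3_t (h : R -> R) : (forall t, continuous h t) -> cont3 (fun x y t => h t).
Proof. intros H [[x y] t]. simpl.
  apply continuous_comp with (f := snd) (g := h). apply continuous_snd. apply H. Qed.
Lemma cont3_x (h : R -> R) : (forall t, continuous h t) -> cont3 (fun x y t => h x).
Proof. intros H [[x y] t]. simpl.
  apply continuous_comp with (f := fun q : R*R*R => fst (fst q)) (g := h).
  apply continuous_comp with (f := fst) (g := fst). apply continuous_fst. apply continuous_fst.
  apply H. Qed.
Lemma cont3_y (h : R -> R) : (forall t, continuous h t) -> cont3 (fun x y t => h y).
Proof. intros H [[x y] t]. simpl.
  apply continuous_comp with (f := fun q : R*R*R => snd (fst q)) (g := h).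
  apply continuous_comp with (f := fst) (g := snd). apply continuous_fst. apply continuous_snd.
  apply H. Qed.
Lemma cont3_plus (F G : field3) : cont3 F -> cont3 G -> cont3 (fun x y t => F x y t + G x y t).
Proof. intros HF HG p. unfold cont3 in *.
  apply (continuous_plus (V := R_NormedModule) (fun q : R*R*R => F (fst (fst q)) (snd (fst q)) (snd q))
   (fun q : R*R*R => G (fst (fst q)) (snd (fst q)) (snd q))); auto. Qed.
Lemma cont3_mult (F G : field3) : cont3 F -> cont3 G -> cont3 (fun x y t => F x y t * G x y t).
Proof. intros HF HG p. unfold cont3 in *.
  apply (continuous_mult (K := R_AbsRing) (fun q : R*R*R => F (fst (fst q)) (snd (fst q)) (snd q))
   (fun q : R*R*R => G (fst (fst q)) (snd (fst q)) (snd q))); auto. Qed.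
Lemma cont3_const (c : R) : cont3 (fun x y t => c).
Proof. intros p. apply continuous_const. Qed.
Lemma cont3_ext (F G : field3) : (forall x y t, F x y t = G x y t) -> cont3 G -> cont3 F.
Proof. intros E H p. eapply continuous_ext; [|apply H]. intros q; simpl. rewrite E; auto. Qed.
Lemma cont3_minus (F G : field3) : cont3 F -> cont3 G -> cont3 (fun x y t => F x y t - G x y t).
Proof. intros HF HG. apply cont3_ext with (fun x y t => F x y t + (-1) * G x y t).
  intros; ring. apply cont3_plus; auto. apply cont3_mult; auto. apply cont3_const. Qed.
Lemma cont3_opp (F : field3) : cont3 F -> cont3 (fun x y t => - F x y t).
Proof. intros HF. apply cont3_ext with (fun x y t => (-1) * F x y t).
  intros; ring. apply cont3_mult; auto. apply cont3_const. Qed.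

Ltac cont3_tac := repeat (first [apply cont3_plus | apply cont3_minus | apply cont3_mult
  | apply cont3_opp | apply cont3_const | apply cont3_t | apply cont3_x | apply cont3_y]).

Definition C1d (F Fx Fy Ft : field3) :=
  (forall x y t, is_derive (fun x' => F x' y t) x (Fx x y t) /\
                 is_derive (fun y' => F x y' t) y (Fy x y t) /\
                 is_derive (fun t' => F x y t') t (Ft x y t)) /\
  cont3 F /\ cont3 Fx /\ cont3 Fy /\ cont3 Ft.

Lemma C1d_dx F Fx Fy Ft : C1d F Fx Fy Ft -> forall x y t, dx F x y t = Fx x y t.
Proof. intros [H _] x y t. unfold dx. apply is_derive_unique. apply H. Qed.
Lemma C1d_dy F Fx Fy Ft : C1d F Fx Fy Ft -> forall x y t, dy F x y t = Fy x y t.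
Proof. intros [H _] x y t. unfold dy. apply is_derive_unique. apply H. Qed.
Lemma C1d_dt F Fx Fy Ft : C1d F Fx Fy Ft -> forall x y t, dt F x y t = Ft x y t.
Proof. intros [H _] x y t. unfold dt. apply is_derive_unique. apply H. Qed.

Lemma C1d_C1 F Fx Fy Ft : C1d F Fx Fy Ft -> C1_3 F.
Proof. intros HC. pose proof HC as [H [c0 [c1 [c2 c3]]]]. split.
  - intros x y t. destruct (H x y t) as [h1 [h2 h3]].
    split; [|split]; eapply ex_of; eauto.
  - split; auto. split; [|split].
    + eapply cont3_ext; [|exact c1]. apply (C1d_dx _ _ _ _ HC).
    + eapply cont3_ext; [|exact c2]. apply (C1d_dy _ _ _ _ HC).
    + eapply cont3_ext; [|exact c3]. apply (C1d_dt _ _ _ _ HC).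
Qed.

Lemma C1d_ext F G Gx Gy Gt : (forall x y t, F x y t = G x y t) -> C1d G Gx Gy Gt -> C1d F Gx Gy Gt.
Proof. intros E [H [c0 c1]]. split; [|split; [eapply cont3_ext; eauto|auto]].
  intros x y t. destruct (H x y t) as [h1 [h2 h3]].
  split; [|split]; (eapply is_derive_ext; [|eauto]); intros; simpl; rewrite E; auto. Qed.

Lemma dx_ext F G : (forall x y t, F x y t = G x y t) -> forall x y t, dx F x y t = dx G x y t.
Proof. intros E x y t. unfold dx. apply Derive_ext. intros; auto. Qed.
Lemma dy_ext F G : (forall x y t, F x y t = G x y t) -> forall x y t, dy F x y t = dy G x y t.
Proof. intros E x y t. unfold dy. apply Derive_ext. intros; auto. Qed.
Lemma dt_ext F G : (forall x y t, F x y t = G x y t) -> forall x y t, dt F x y t = dt G x y t.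
Proof. intros E x y t. unfold dt. apply Derive_ext. intros; auto. Qed.


Lemma ex_ff c1 kr kp t1 t : ex_derive (ff c1 kr kp t1) t. Proof. eapply ex_of; apply ff_d. Qed.
Lemma ex_gg c1 kr kp t1 t : ex_derive (gg c1 kr kp t1) t. Proof. eapply ex_of; apply gg_d. Qed.
Lemma ex_ff1 c1 kr kp t1 t : ex_derive (ff1 c1 kr kp t1) t. Proof. eapply ex_of; apply ff1_d. Qed.
Lemma ex_gg1 c1 kr kp t1 t : ex_derive (gg1 c1 kr kp t1) t. Proof. eapply ex_of; apply gg1_d. Qed.
Lemma ex_WW kr t1 t : ex_derive (WW kr t1) t. Proof. eapply ex_of; apply WW_d. Qed.
Lemma D_ff c1 kr kp t1 t : Derive (ff c1 kr kp t1) t = ff1 c1 kr kp t1 t. Proof. apply is_derive_unique; apply ff_d. Qed.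
Lemma D_gg c1 kr kp t1 t : Derive (gg c1 kr kp t1) t = gg1 c1 kr kp t1 t. Proof. apply is_derive_unique; apply gg_d. Qed.
Lemma D_ff1 c1 kr kp t1 t : Derive (ff1 c1 kr kp t1) t = ff2 c1 kr kp t1 t. Proof. apply is_derive_unique; apply ff1_d. Qed.
Lemma D_gg1 c1 kr kp t1 t : Derive (gg1 c1 kr kp t1) t = gg2 c1 kr kp t1 t. Proof. apply is_derive_unique; apply gg1_d. Qed.
Lemma D_WW kr t1 t : Derive (WW kr t1) t = WW1 kr t1 t. Proof. apply is_derive_unique; apply WW_d. Qed.
Global Hint Resolve ex_ff ex_gg ex_ff1 ex_gg1 ex_WW : exd.

Lemma c_ext (f g : R -> R) (x : R) : (forall z, f z = g z) -> continuous f x -> continuous g x.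
Proof. intros E H. apply (continuous_ext f g x); auto. Qed.

Lemma c_cos a x : continuous (fun x => cos (a * x)) x.
Proof. eapply cont_of_derive. auto_derive; auto. Qed.
Lemma c_sin a x : continuous (fun x => sin (a * x)) x.
Proof. eapply cont_of_derive. auto_derive; auto. Qed.
Lemma c_ff c1 kr kp t1 t : continuous (ff c1 kr kp t1) t. Proof. eapply cont_of_derive; apply ff_d. Qed.
Lemma c_gg c1 kr kp t1 t : continuous (gg c1 kr kp t1) t. Proof. eapply cont_of_derive; apply gg_d. Qed.
Lemma c_ff1 c1 kr kp t1 t : continuous (ff1 c1 kr kp t1) t. Proof. eapply cont_of_derive; apply ff1_d. Qed.
Lemma c_gg1 c1 kr kp t1 t : continuous (gg1 c1 kr kp t1) t. Proof. eapply cont_of_derive; apply gg1_d. Qed.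
Lemma c_ff2 c1 kr kp t1 t : continuous (ff2 c1 kr kp t1) t.
Proof. eapply cont_of_derive. unfold ff2, Qf, Wt. auto_derive; repeat split; auto with exd. Qed.
Lemma c_gg2 c1 kr kp t1 t : continuous (gg2 c1 kr kp t1) t.
Proof. eapply cont_of_derive. unfold gg2, Qf, Wt. auto_derive; repeat split; auto with exd. Qed.
Lemma c_S3s a t : continuous (fun t => S3 (t - a)) t.
Proof. apply continuous_comp with (f := fun t => t - a) (g := S3).
  eapply cont_of_derive. auto_derive; auto. apply S3_c. Qed.
Lemma c_WW kr t1 t : continuous (WW kr t1) t. Proof. eapply cont_of_derive; apply WW_d. Qed.
Lemma c_th3 t1 t : continuous (th3 t1) t.
Proof. unfold th3.
  apply c_ext with (fun t => (PI/2) * S3 (t - (t1 + 3))).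
  intros z; replace (z - t1 - 3) with (z - (t1 + 3)) by ring; reflexivity.
  apply (continuous_scal_r (V := R_NormedModule) (PI/2) (fun t => S3 (t - (t1+3)))). apply c_S3s. Qed.
Lemma c_th2 t1 t : continuous (th2 t1) t. Proof. eapply cont_of_derive; apply th2_d. Qed.
Lemma c_WW1 kr t1 t : continuous (WW1 kr t1) t.
Proof. unfold WW1.
  apply c_ext with (fun t => (2*kr) * th2 t1 t + (-1) * th3 t1 t).
  intros; ring. apply c_plus; apply c_mult; try apply continuous_const. apply c_th2. apply c_th3. Qed.
Lemma c_a0 kr t1 t : continuous (a0 kr t1) t.
Proof. eapply cont_of_derive. unfold a0. auto_derive; repeat split; auto with exd. Qed.
Lemma c_a01 kr t1 t : continuous (a01 kr t1) t.
Proof. eapply cont_of_derive. unfold a01. auto_derive; repeat split; auto with exd. Qed.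
Lemma c_d0 kr kp t1 t : continuous (d0 kr kp t1) t.
Proof. eapply cont_of_derive. unfold d0, Qf. auto_derive; repeat split; auto with exd. Qed.
Lemma c_d01 kr kp t1 t : continuous (d01 kr kp t1) t.
Proof. eapply cont_of_derive. unfold d01, Ph3. auto_derive; repeat split; auto with exd. Qed.

Definition uF c1 kr kp t1 : field3 := fun x y t =>
  ff c1 kr kp t1 t * cos (kr * x) + gg c1 kr kp t1 t * cos (kp * y).
Definition uX c1 kr kp t1 : field3 := fun x y t => - kr * ff c1 kr kp t1 t * sin (kr * x).
Definition uY c1 kr kp t1 : field3 := fun x y t => - kp * gg c1 kr kp t1 t * sin (kp * y).
Definition uT c1 kr kp t1 : field3 := fun x y t =>
  ff1 c1 kr kp t1 t * cos (kr * x) + gg1 c1 kr kp t1 t * cos (kp * y).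

Ltac cont3_step := match goal with
 | |- cont3 (fun x y t => @?h t) => apply (cont3_t h)
 | |- cont3 (fun x y t => @?h x) => apply (cont3_x h)
 | |- cont3 (fun x y t => @?h y) => apply (cont3_y h)
 | |- cont3 (fun x y t => @?F x y t + @?G x y t) => apply (cont3_plus F G)
 | |- cont3 (fun x y t => @?F x y t - @?G x y t) => apply (cont3_minus F G)
 | |- cont3 (fun x y t => @?F x y t * @?G x y t) => apply (cont3_mult F G)
 | |- cont3 (fun x y t => - @?F x y t) => apply (cont3_opp F)
 end.
Lemma c_minus (f g : R -> R) x : continuous f x -> continuous g x -> continuous (fun x => f x - g x) x.
Proof. intros. apply c_ext with (fun x => f x + (-1) * g x). intros; ring.
  apply c_plus; auto. apply c_mult; auto. apply continuous_const. Qed.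
Lemma c_opp (f : R -> R) x : continuous f x -> continuous (fun x => - f x) x.
Proof. intros. apply c_ext with (fun x => (-1) * f x). intros; ring.
  apply c_mult; auto. apply continuous_const. Qed.
Lemma c_divc (f : R -> R) c x : continuous f x -> continuous (fun x => f x / c) x.
Proof. intros. apply c_ext with (fun x => f x * / c). intros; reflexivity.
  apply c_mult; auto. apply continuous_const. Qed.

Ltac c1fin := intros; match goal with
 | |- continuous (fun x => cos (_ * x)) _ => apply c_cos
 | |- continuous (fun x => sin (_ * x)) _ => apply c_sin
 | |- continuous (fun t => ff _ _ _ _ t) _ => apply c_ff
 | |- continuous (fun t => gg _ _ _ _ t) _ => apply c_gg
 | |- continuous (fun t => ff1 _ _ _ _ t) _ => apply c_ff1
 | |- continuous (fun t => gg1 _ _ _ _ t) _ => apply c_gg1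
 | |- continuous (fun t => ff2 _ _ _ _ t) _ => apply c_ff2
 | |- continuous (fun t => gg2 _ _ _ _ t) _ => apply c_gg2
 | |- continuous (fun t => WW _ _ t) _ => apply c_WW
 | |- continuous (fun t => WW1 _ _ t) _ => apply c_WW1
 | |- continuous (fun t => a0 _ _ t) _ => apply c_a0
 | |- continuous (fun t => a01 _ _ t) _ => apply c_a01
 | |- continuous (fun t => d0 _ _ _ t) _ => apply c_d0
 | |- continuous (fun t => d01 _ _ _ t) _ => apply c_d01
 | |- continuous (fun t => _) _ => apply continuous_const
 | |- continuous (fun t => @?f t + @?g t) _ => apply (c_plus f g); c1fin
 | |- continuous (fun t => @?f t - @?g t) _ => apply (c_minus f g); c1fin
 | |- continuous (fun t => @?f t * @?g t) _ => apply (c_mult f g); c1fin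
 | |- continuous (fun t => @?f t / _) _ => apply (c_divc f); c1fin
 | |- continuous (fun t => - @?f t) _ => apply (c_opp f); c1fin
 | _ => idtac
 end.
Ltac cont3_all := repeat cont3_step; c1fin.
Ltac drw := rewrite ?D_ff, ?D_gg, ?D_ff1, ?D_gg1, ?D_WW; first [ring | field; auto].
Ltac dpart := auto_derive; [repeat split; auto with exd | drw].

Lemma u_C1d c1 kr kp t1 : C1d (uF c1 kr kp t1) (uX c1 kr kp t1) (uY c1 kr kp t1) (uT c1 kr kp t1).
Proof. unfold uF, uX, uY, uT. split. intros x y t. split; [|split]; dpart.
  repeat split; cont3_all. Qed.

Lemma uX_C1d c1 kr kp t1 : C1d (uX c1 kr kp t1)
  (fun x y t => - kr * kr * ff c1 kr kp t1 t * cos (kr * x)) (fun x y t => 0)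
  (fun x y t => - kr * ff1 c1 kr kp t1 t * sin (kr * x)).
Proof. unfold uX. split. intros x y t. split; [|split]; dpart.
  repeat split; cont3_all. Qed.
Lemma uY_C1d c1 kr kp t1 : C1d (uY c1 kr kp t1) (fun x y t => 0)
  (fun x y t => - kp * kp * gg c1 kr kp t1 t * cos (kp * y))
  (fun x y t => - kp * gg1 c1 kr kp t1 t * sin (kp * y)).
Proof. unfold uY. split. intros x y t. split; [|split]; dpart.
  repeat split; cont3_all. Qed.
Lemma uT_C1d c1 kr kp t1 : C1d (uT c1 kr kp t1)
  (fun x y t => - kr * ff1 c1 kr kp t1 t * sin (kr * x))
  (fun x y t => - kp * gg1 c1 kr kp t1 t * sin (kp * y))
  (fun x y t => ff2 c1 kr kp t1 t * cos (kr * x) + gg2 c1 kr kp t1 t * cos (kp * y)).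
Proof. unfold uT. split. intros x y t. split; [|split]; dpart.
  repeat split; cont3_all. Qed.

Definition A11 kr kp t1 : field3 := fun x y t =>
  a0 kr t1 t - WW kr t1 t / kr^2 * (cos (kr * x) * cos (kp * y)).
Definition A12 kr kp t1 : field3 := fun x y t =>
  2 * WW kr t1 t / (kr * kp) * (sin (kr * x) * sin (kp * y)).
Definition A21 kr kp t1 : field3 := fun x y t =>
  - (2 * WW kr t1 t / (kr * kp)) * (sin (kr * x) * sin (kp * y)).
Definition A22 kr kp t1 : field3 := fun x y t =>
  d0 kr kp t1 t + WW kr t1 t / kp^2 * (cos (kr * x) * cos (kp * y)).

Lemma D_a0 kr t1 t : kr <> 0 -> Derive (a0 kr t1) t = a01 kr t1 t.
Proof. intros; apply is_derive_unique; apply a0_d; auto. Qed.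
Lemma D_d0 kr kp t1 t : kp <> 0 -> Derive (d0 kr kp t1) t = d01 kr kp t1 t.
Proof. intros; apply is_derive_unique; apply d0_d; auto. Qed.
Lemma ex_a0 kr t1 t : ex_derive (a0 kr t1) t.
Proof. unfold a0. auto_derive. repeat split; auto with exd. Qed.
Lemma ex_d0 kr kp t1 t : ex_derive (d0 kr kp t1) t.
Proof. unfold d0, Qf. auto_derive. repeat split; auto with exd. Qed.
Global Hint Resolve ex_a0 ex_d0 : exd.

Lemma A11_C1d kr kp t1 (Hr : kr <> 0) (Hp : kp <> 0) : C1d (A11 kr kp t1)
  (fun x y t => WW kr t1 t / kr^2 * (kr * sin (kr * x) * cos (kp * y)))
  (fun x y t => WW kr t1 t / kr^2 * (kp * cos (kr * x) * sin (kp * y)))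
  (fun x y t => a01 kr t1 t - WW1 kr t1 t / kr^2 * (cos (kr * x) * cos (kp * y))).
Proof. unfold A11. split. intros x y t. split; [|split]. dpart. dpart.
  auto_derive. repeat split; auto with exd. rewrite D_a0, D_WW by auto. field; auto.
  repeat split; cont3_all. Qed.
Lemma A12_C1d kr kp t1 (Hr : kr <> 0) (Hp : kp <> 0) : C1d (A12 kr kp t1)
  (fun x y t => 2 * WW kr t1 t / (kr * kp) * (kr * cos (kr * x) * sin (kp * y)))
  (fun x y t => 2 * WW kr t1 t / (kr * kp) * (kp * sin (kr * x) * cos (kp * y)))
  (fun x y t => 2 * WW1 kr t1 t / (kr * kp) * (sin (kr * x) * sin (kp * y))).
Proof. unfold A12. split. intros x y t. split; [|split]; dpart.
  repeat split; cont3_all. Qed.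
Lemma A21_C1d kr kp t1 (Hr : kr <> 0) (Hp : kp <> 0) : C1d (A21 kr kp t1)
  (fun x y t => - (2 * WW kr t1 t / (kr * kp)) * (kr * cos (kr * x) * sin (kp * y)))
  (fun x y t => - (2 * WW kr t1 t / (kr * kp)) * (kp * sin (kr * x) * cos (kp * y)))
  (fun x y t => - (2 * WW1 kr t1 t / (kr * kp)) * (sin (kr * x) * sin (kp * y))).
Proof. unfold A21. split. intros x y t. split; [|split]; dpart.
  repeat split; cont3_all. Qed.
Lemma A22_C1d kr kp t1 (Hr : kr <> 0) (Hp : kp <> 0) : C1d (A22 kr kp t1)
  (fun x y t => WW kr t1 t / kp^2 * (- (kr * sin (kr * x)) * cos (kp * y)))
  (fun x y t => WW kr t1 t / kp^2 * (cos (kr * x) * - (kp * sin (kp * y))))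
  (fun x y t => d01 kr kp t1 t + WW1 kr t1 t / kp^2 * (cos (kr * x) * cos (kp * y))).
Proof. unfold A22. split. intros x y t. split; [|split]. dpart. dpart.
  auto_derive. repeat split; auto with exd. rewrite D_d0, D_WW by auto. field; auto.
  repeat split; cont3_all. Qed.


Lemma Ph1_early kr kp t1 t : t - t1 <= 5 -> Ph1 kr kp t1 t = kr.
Proof. intros H. unfold Ph1. rewrite !Sg_le0 by lra. ring. Qed.
Lemma Ph2_early kr kp t1 t : t - t1 <= 5 -> Ph2 kr kp t1 t = 0.
Proof. intros H. unfold Ph2. rewrite !S1_out by lra. ring. Qed.
Lemma Ph3_early kr kp t1 t : t - t1 <= 5 -> Ph3 kr kp t1 t = 0.
Proof. intros H. unfold Ph3. rewrite !S2_out by lra. ring. Qed.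
Lemma Ph_early kr kp t1 t : t - t1 <= 5 -> Ph kr kp t1 t = kr * t.
Proof. intros H. unfold Ph. rewrite !Sig_le0 by lra. ring. Qed.
Lemma th_late t1 t : 4 <= t - t1 -> th t1 t = PI/2.
Proof. intros H. unfold th. rewrite Sg_ge1 by lra. ring. Qed.
Lemma th1_late t1 t : 4 <= t - t1 -> th1 t1 t = 0.
Proof. intros H. unfold th1. rewrite S1_out by lra. ring. Qed.
Lemma th2_late t1 t : 4 <= t - t1 -> th2 t1 t = 0.
Proof. intros H. unfold th2. rewrite S2_out by lra. ring. Qed.
Lemma th3_late t1 t : 4 <= t - t1 -> th3 t1 t = 0.
Proof. intros H. unfold th3. rewrite S3_out by lra. ring. Qed.
Lemma th_early t1 t : t - t1 <= 3 -> th t1 t = 0.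
Proof. intros H. unfold th. rewrite Sg_le0 by lra. ring. Qed.
Lemma th1_early t1 t : t - t1 <= 3 -> th1 t1 t = 0.
Proof. intros H. unfold th1. rewrite S1_out by lra. ring. Qed.
Lemma th2_early t1 t : t - t1 <= 3 -> th2 t1 t = 0.
Proof. intros H. unfold th2. rewrite S2_out by lra. ring. Qed.
Lemma th3_early t1 t : t - t1 <= 3 -> th3 t1 t = 0.
Proof. intros H. unfold th3. rewrite S3_out by lra. ring. Qed.

Lemma cross0 kr kp t1 t : (Ph1 kr kp t1 t - kr) * th1 t1 t = 0.
Proof. destruct (Rle_dec (t - t1) 5).
  rewrite Ph1_early by lra. ring. rewrite th1_late by lra. ring. Qed.

Lemma I1 c1 kr kp t1 t : kr <> 0 ->
  ff2 c1 kr kp t1 t - kr^2 * a0 kr t1 t * ff c1 kr kp t1 t - WW kr t1 t * gg c1 kr kp t1 t = 0.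
Proof. intros Hk. unfold ff2, a0, Qf, Wt, WW.
  replace (((Ph1 kr kp t1 t ^ 2 - Ph2 kr kp t1 t - th1 t1 t ^ 2) * ff c1 kr kp t1 t +
    (2 * Ph1 kr kp t1 t * th1 t1 t - th2 t1 t) * gg c1 kr kp t1 t -
    kr ^ 2 * (1 - th1 t1 t ^ 2 / kr ^ 2) * ff c1 kr kp t1 t -
    (2 * kr * th1 t1 t - th2 t1 t) * gg c1 kr kp t1 t))
  with ((Ph1 kr kp t1 t ^ 2 - Ph2 kr kp t1 t - kr^2) * ff c1 kr kp t1 t +
        2 * ((Ph1 kr kp t1 t - kr) * th1 t1 t) * gg c1 kr kp t1 t) by (field; auto).
  rewrite cross0. destruct (Rle_dec (t - t1) 5).
  rewrite Ph1_early, Ph2_early by lra. ring.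
  unfold ff. rewrite th_late by lra. rewrite cos_PI2. ring. Qed.

Lemma I2 c1 kr kp t1 t : kp <> 0 ->
  gg2 c1 kr kp t1 t - kp^2 * d0 kr kp t1 t * gg c1 kr kp t1 t + WW kr t1 t * ff c1 kr kp t1 t = 0.
Proof. intros Hk. unfold gg2, d0, Qf, Wt, WW.
  replace ((Ph1 kr kp t1 t ^ 2 - Ph2 kr kp t1 t - th1 t1 t ^ 2) * gg c1 kr kp t1 t -
   (2 * Ph1 kr kp t1 t * th1 t1 t - th2 t1 t) * ff c1 kr kp t1 t -
   kp ^ 2 *
   (1 + (kr ^ 2 / kp ^ 2 - 1) * Sg (t - t1 - 1) +
    (Ph1 kr kp t1 t ^ 2 - Ph2 kr kp t1 t - th1 t1 t ^ 2 - kr ^ 2) / kp ^ 2) *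
   gg c1 kr kp t1 t + (2 * kr * th1 t1 t - th2 t1 t) * ff c1 kr kp t1 t)
  with ((kr^2 - kp^2) * (1 - Sg (t - t1 - 1)) * gg c1 kr kp t1 t -
        2 * ((Ph1 kr kp t1 t - kr) * th1 t1 t) * ff c1 kr kp t1 t) by (field; auto).
  rewrite cross0. destruct (Rle_dec (t - t1) 3).
  unfold gg. rewrite th_early by lra. rewrite sin_0. ring.
  rewrite Sg_ge1 by lra. ring. Qed.

Definition Am kr kp t1 := MatField (A11 kr kp t1) (A12 kr kp t1) (A21 kr kp t1) (A22 kr kp t1).

Lemma solves c1 kr kp t1 : kr <> 0 -> kp <> 0 -> solves_eq (Am kr kp t1) (uF c1 kr kp t1).
Proof. intros Hr Hp x y t. simpl.
  rewrite (dt_ext _ _ (C1d_dt _ _ _ _ (u_C1d c1 kr kp t1))).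
  rewrite (C1d_dt _ _ _ _ (uT_C1d c1 kr kp t1)).
  set (U := uF c1 kr kp t1).
  rewrite (dx_ext (fun x y t => A11 kr kp t1 x y t * dx U x y t + A12 kr kp t1 x y t * dy U x y t)
     (fun x y t => A11 kr kp t1 x y t * uX c1 kr kp t1 x y t + A12 kr kp t1 x y t * uY c1 kr kp t1 x y t)).
  2:{ intros. rewrite (C1d_dx _ _ _ _ (u_C1d c1 kr kp t1)), (C1d_dy _ _ _ _ (u_C1d c1 kr kp t1)). reflexivity. }
  rewrite (dy_ext (fun x y t => A21 kr kp t1 x y t * dx U x y t + A22 kr kp t1 x y t * dy U x y t)
     (fun x y t => A21 kr kp t1 x y t * uX c1 kr kp t1 x y t + A22 kr kp t1 x y t * uY c1 kr kp t1 x y t)).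
  2:{ intros. rewrite (C1d_dx _ _ _ _ (u_C1d c1 kr kp t1)), (C1d_dy _ _ _ _ (u_C1d c1 kr kp t1)). reflexivity. }
  set (W := WW kr t1 t). set (f := ff c1 kr kp t1 t). set (g := gg c1 kr kp t1 t).
  set (A := a0 kr t1 t). set (D := d0 kr kp t1 t).
  set (cX := cos (kr * x)). set (sX := sin (kr * x)). set (cY := cos (kp * y)). set (sY := sin (kp * y)).
  assert (E1 : dx (fun x y t => A11 kr kp t1 x y t * uX c1 kr kp t1 x y t + A12 kr kp t1 x y t * uY c1 kr kp t1 x y t) x y t
     = (W/kr^2)*(kr*sX*cY)*(-kr*f*sX) + (A - W/kr^2*(cX*cY))*(-kr*kr*f*cX)
       + (2*W/(kr*kp))*(kr*cX*sY)*(-kp*g*sY)).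
  { unfold dx. apply is_derive_unique. unfold A11, A12, uX, uY.
    auto_derive; auto. subst W f g A cX sX cY sY. field; auto. }
  assert (E2 : dy (fun x y t => A21 kr kp t1 x y t * uX c1 kr kp t1 x y t + A22 kr kp t1 x y t * uY c1 kr kp t1 x y t) x y t
     = (- (2*W/(kr*kp)))*(kp*sX*cY)*(-kr*f*sX) + (W/kp^2*(cX*(-(kp*sY))))*(-kp*g*sY)
       + (D + W/kp^2*(cX*cY))*(-kp*kp*g*cY)).
  { unfold dy. apply is_derive_unique. unfold A21, A22, uX, uY.
    auto_derive; auto. subst W f g D cX sX cY sY. field; auto. }
  rewrite E1, E2.
  pose proof (I1 c1 kr kp t1 t Hr) as H1. pose proof (I2 c1 kr kp t1 t Hp) as H2.
  fold W f g A D in H1, H2.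
  pose proof (sin2_cos2 (kr * x)) as T1. pose proof (sin2_cos2 (kp * y)) as T2.
  fold sX cX in T1. fold sY cY in T2. unfold Rsqr in T1, T2.
  replace (ff2 c1 kr kp t1 t * cX + gg2 c1 kr kp t1 t * cY +
   (W / kr ^ 2 * (kr * sX * cY) * (- kr * f * sX) + (A - W / kr ^ 2 * (cX * cY)) * (- kr * kr * f * cX) +
    2 * W / (kr * kp) * (kr * cX * sY) * (- kp * g * sY)) +
   (- (2 * W / (kr * kp)) * (kp * sX * cY) * (- kr * f * sX) + W / kp ^ 2 * (cX * - (kp * sY)) * (- kp * g * sY) +
    (D + W / kp ^ 2 * (cX * cY)) * (- kp * kp * g * cY)))
  with ((ff2 c1 kr kp t1 t - kr ^ 2 * A * f - W * g) * cX
        + (gg2 c1 kr kp t1 t - kp ^ 2 * D * g + W * f) * cY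
        + W * f * cY * (sX * sX + cX * cX - 1) - W * g * cX * (sY * sY + cY * cY - 1)) by (field; auto).
  rewrite H1, H2, T1, T2. ring.
Qed.


Lemma per_cos (n : Z) x : (0 <= n)%Z -> cos (IZR n * (x + 2*PI)) = cos (IZR n * x).
Proof. intros H. rewrite <- (Z2Nat.id n H). rewrite <- INR_IZR_INZ.
  replace (INR (Z.to_nat n) * (x + 2 * PI)) with (INR (Z.to_nat n) * x + 2 * INR (Z.to_nat n) * PI) by ring.
  apply cos_period. Qed.
Lemma per_sin (n : Z) x : (0 <= n)%Z -> sin (IZR n * (x + 2*PI)) = sin (IZR n * x).
Proof. intros H. rewrite <- (Z2Nat.id n H). rewrite <- INR_IZR_INZ.
  replace (INR (Z.to_nat n) * (x + 2 * PI)) with (INR (Z.to_nat n) * x + 2 * INR (Z.to_nat n) * PI) by ring.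
  apply sin_period. Qed.

Lemma u_per c1 (k k' : Z) t1 : (0 <= k)%Z -> (0 <= k')%Z -> periodic_xy (uF c1 (IZR k) (IZR k') t1).
Proof. intros H1 H2 x y t. unfold uF. rewrite per_cos, per_cos by auto. auto. Qed.

Lemma A_per (k k' : Z) t1 : (0 <= k)%Z -> (0 <= k')%Z -> mat_periodic (Am (IZR k) (IZR k') t1).
Proof. intros H1 H2. unfold mat_periodic, Am; simpl. unfold A11, A12, A21, A22.
  repeat split; intros; rewrite ?per_cos, ?per_sin by auto; auto. Qed.

Lemma u_C2 c1 kr kp t1 : C2_3 (uF c1 kr kp t1).
Proof. split; [|split; [|split]].
  - eapply C1d_C1. apply u_C1d.
  - eapply C1d_C1. eapply C1d_ext; [|apply uX_C1d]. apply (C1d_dx _ _ _ _ (u_C1d c1 kr kp t1)).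
  - eapply C1d_C1. eapply C1d_ext; [|apply uY_C1d]. apply (C1d_dy _ _ _ _ (u_C1d c1 kr kp t1)).
  - eapply C1d_C1. eapply C1d_ext; [|apply uT_C1d]. apply (C1d_dt _ _ _ _ (u_C1d c1 kr kp t1)).
Qed.

Lemma A_C1 kr kp t1 : kr <> 0 -> kp <> 0 -> mat_C1 (Am kr kp t1).
Proof. intros Hr Hp. unfold mat_C1, Am; simpl.
  split; [|split; [|split]]; eapply C1d_C1; [apply A11_C1d|apply A12_C1d|apply A21_C1d|apply A22_C1d]; auto. Qed.

Lemma early_u c1 kr kp t1 x y t : t - t1 <= 3 ->
  uF c1 kr kp t1 x y t = c1 * cos (kr * x) * exp (- kr * t).
Proof. intros H. unfold uF, ff, gg. rewrite th_early, Ph_early by lra.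
  rewrite cos_0, sin_0. replace (- (kr * t)) with (- kr * t) by ring. ring. Qed.

Lemma early_Id kr kp t1 x y t : kr <> 0 -> kp <> 0 -> t - t1 <= 1 -> is_Id_at (Am kr kp t1) x y t.
Proof. intros Hr Hp H. unfold is_Id_at, Am; simpl. unfold A11, A12, A21, A22, a0, WW, d0, Qf.
  rewrite th1_early, th2_early, Ph1_early, Ph2_early, Sg_le0 by lra.
  repeat split; field; auto. Qed.

Lemma nu_id kr kp : - (11/2) * al kr kp - (51/2) * be kr kp = kr/2 - 5*kp/6.
Proof. unfold al, be, nu. field. Qed.

Lemma late_Ph kr kp t1 t : 26 <= t - t1 ->
  Ph kr kp t1 t = kp * t - kp * t1 + kr * t1 + kr/2 - 5*kp/6.
Proof. intros H. unfold Ph. rewrite !Sig_ge1 by lra.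
  pose proof (nu_id kr kp). unfold al, be, nu in *. lra. Qed.

Lemma late_u c1 c2 kr kp t1 x y t : 26 <= t - t1 ->
  c1 * exp (- kr / 2 + 5 * kp / 6) * exp (- kr * t1) = c2 * exp (- kp * t1) ->
  uF c1 kr kp t1 x y t = c2 * cos (kp * y) * exp (- kp * t).
Proof. intros H E. unfold uF, ff, gg. rewrite th_late by lra. rewrite cos_PI2, sin_PI2.
  assert (EX : exp (- Ph kr kp t1 t) = exp (- kr / 2 + 5 * kp / 6) * exp (- kr * t1) * exp (kp * t1) * exp (- kp * t)).
  { rewrite <- !exp_plus. f_equal. rewrite late_Ph by lra. field. }
  assert (EY : exp (- kp * t1) * exp (kp * t1) = 1).
  { rewrite <- exp_plus. replace (- kp * t1 + kp * t1) with 0 by ring. apply exp_0. }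
  rewrite EX.
  replace (c1 * (exp (- kr / 2 + 5 * kp / 6) * exp (- kr * t1) * exp (kp * t1) * exp (- kp * t)))
    with ((c1 * exp (- kr / 2 + 5 * kp / 6) * exp (- kr * t1)) * exp (kp * t1) * exp (- kp * t)) by ring.
  rewrite E.
  replace (c2 * exp (- kp * t1) * exp (kp * t1)) with (c2 * (exp (- kp * t1) * exp (kp * t1))) by ring.
  rewrite EY. ring. Qed.

Lemma late_Id kr kp t1 x y t : kr <> 0 -> kp <> 0 -> 26 <= t - t1 -> is_Id_at (Am kr kp t1) x y t.
Proof. intros Hr Hp H. unfold is_Id_at, Am; simpl. unfold A11, A12, A21, A22, a0, WW, d0, Qf.
  rewrite th1_late, th2_late by lra. rewrite Sg_ge1 by lra.
  assert (P1 : Ph1 kr kp t1 t = kp). { unfold Ph1. rewrite !Sg_ge1 by lra. unfold al, be. ring. }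
  assert (P2 : Ph2 kr kp t1 t = 0). { unfold Ph2. rewrite !S1_out by lra. ring. }
  rewrite P1, P2. repeat split; field; auto. Qed.

Lemma C21_ff c1 kr kp t1 : C2_1 (ff c1 kr kp t1).
Proof. split; [|split].
  - apply ex_ff.
  - intros t. apply ex_derive_ext with (ff1 c1 kr kp t1). intros; rewrite D_ff; auto. apply ex_ff1.
  - intros t. apply c_ext with (ff2 c1 kr kp t1); [|apply c_ff2].
    intros z. simpl. rewrite (Derive_ext (fun t => Derive (ff c1 kr kp t1) t) (ff1 c1 kr kp t1)).
    rewrite D_ff1; auto. intros; apply D_ff.
Qed.
Lemma C21_gg c1 kr kp t1 : C2_1 (gg c1 kr kp t1).
Proof. split; [|split].
  - apply ex_gg.
  - intros t. apply ex_derive_ext with (gg1 c1 kr kp t1). intros; rewrite D_gg; auto. apply ex_gg1.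
  - intros t. apply c_ext with (gg2 c1 kr kp t1); [|apply c_gg2].
    intros z. simpl. rewrite (Derive_ext (fun t => Derive (gg c1 kr kp t1) t) (gg1 c1 kr kp t1)).
    rewrite D_gg1; auto. intros; apply D_gg.
Qed.


Definition hyp (kr kp : R) := 10000 <= kr /\ kr < kp /\ kp <= 2 * kr.

Lemma abs_inv a b : Rabs a <= b -> - b <= a <= b.
Proof. intros H. pose proof (Rle_abs a). pose proof (Rle_abs (- a)). rewrite Rabs_Ropp in H1. lra. Qed.

Lemma PI_bnd : 0 < PI <= 4.
Proof. split. apply PI_RGT_0. apply PI_4. Qed.

Lemma th1_bnd t1 t : 0 <= th1 t1 t <= 6.
Proof. unfold th1. pose proof (S1_bnd (t - t1 - 3)). pose proof PI_bnd. nra. Qed.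
Lemma th2_bnd t1 t : Rabs (th2 t1 t) <= 60.
Proof. unfold th2. pose proof (S2_bnd (t - t1 - 3)). pose proof PI_bnd.
  apply abs_inv in H. apply Rabs_le. split; nra. Qed.
Lemma th3_bnd t1 t : Rabs (th3 t1 t) <= 40000.
Proof. unfold th3. pose proof (S3_bnd (t - t1 - 3)). pose proof PI_bnd.
  apply abs_inv in H. apply Rabs_le. split; nra. Qed.

Lemma al_bnd kr kp : hyp kr kp -> - kp / 60 <= al kr kp <= kp.
Proof. intros [H1 [H2 H3]]. unfold al, nu. lra. Qed.
Lemma be_bnd kr kp : hyp kr kp -> - kp / 4 <= be kr kp <= kp / 60.
Proof. intros [H1 [H2 H3]]. unfold be, nu. lra. Qed.

Lemma Ph1_lo kr kp t1 t : hyp kr kp -> kp / 2 <= Ph1 kr kp t1 t.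
Proof. intros Hh. pose proof Hh as [H1 [H2 H3]]. unfold Ph1.
  pose proof (Sg_bnd (t - t1 - 5)). pose proof (Sg_bnd (t - t1 - 25)).
  destruct (Rle_dec (t - t1) 25).
  - rewrite (Sg_le0 (t - t1 - 25)) by lra. unfold al, nu.
    set (s := Sg (t - t1 - 5)) in *. nra.
  - rewrite (Sg_ge1 (t - t1 - 5)) by lra. unfold al, be, nu.
    set (s := Sg (t - t1 - 25)) in *. nra.
Qed.
Lemma Ph1_hi kr kp t1 t : hyp kr kp -> Ph1 kr kp t1 t <= 3 * kp.
Proof. intros Hh. pose proof Hh as [H1 [H2 H3]]. unfold Ph1.
  pose proof (Sg_bnd (t - t1 - 5)). pose proof (Sg_bnd (t - t1 - 25)).
  pose proof (al_bnd _ _ Hh). pose proof (be_bnd _ _ Hh). nra. Qed.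
Lemma Ph2_bnd kr kp t1 t : hyp kr kp -> Rabs (Ph2 kr kp t1 t) <= 4 * kp.
Proof. intros Hh. pose proof Hh as [H1 [H2 H3]]. unfold Ph2.
  pose proof (S1_bnd (t - t1 - 5)). pose proof (S1_bnd (t - t1 - 25)).
  pose proof (al_bnd _ _ Hh). pose proof (be_bnd _ _ Hh). apply Rabs_le. split; nra. Qed.
Lemma Ph3_bnd kr kp t1 t : hyp kr kp -> Rabs (Ph3 kr kp t1 t) <= 40 * kp.
Proof. intros Hh. pose proof Hh as [H1 [H2 H3]]. unfold Ph3.
  pose proof (S2_bnd (t - t1 - 5)) as A. pose proof (S2_bnd (t - t1 - 25)) as B.
  apply abs_inv in A. apply abs_inv in B.
  pose proof (al_bnd _ _ Hh). pose proof (be_bnd _ _ Hh). apply Rabs_le. split; nra. Qed.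
Lemma WW_bnd kr kp t1 t : hyp kr kp -> Rabs (WW kr t1 t) <= 13 * kr.
Proof. intros Hh. pose proof Hh as [H1 [H2 H3]]. unfold WW.
  pose proof (th1_bnd t1 t). pose proof (th2_bnd t1 t) as A. apply abs_inv in A.
  apply Rabs_le. split; nra. Qed.
Lemma WW1_bnd kr kp t1 t : hyp kr kp -> Rabs (WW1 kr t1 t) <= kr^2 / 2.
Proof. intros Hh. pose proof Hh as [H1 [H2 H3]]. unfold WW1.
  pose proof (th3_bnd t1 t) as B. pose proof (th2_bnd t1 t) as A. apply abs_inv in A. apply abs_inv in B.
  apply Rabs_le. split; nra. Qed.

Lemma d0_eq kr kp t1 t : kp <> 0 -> d0 kr kp t1 t * kp^2 =
  kp^2 + (kr^2 - kp^2) * Sg (t - t1 - 1) + Ph1 kr kp t1 t ^ 2 - Ph2 kr kp t1 t - th1 t1 t ^ 2 - kr^2.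
Proof. intros. unfold d0, Qf. field. auto. Qed.

Lemma d0_bnd kr kp t1 t : hyp kr kp -> 6/25 * kp^2 <= d0 kr kp t1 t * kp^2 <= 11 * kp^2.
Proof. intros Hh. pose proof Hh as [H1 [H2 H3]]. rewrite d0_eq by lra.
  pose proof (Sg_bnd (t - t1 - 1)). pose proof (th1_bnd t1 t).
  pose proof (Ph1_lo _ _ t1 t Hh). pose proof (Ph1_hi _ _ t1 t Hh).
  pose proof (Ph2_bnd _ _ t1 t Hh) as P2. apply abs_inv in P2.
  split.
  - destruct (Rle_dec (t - t1) 5).
    + rewrite Ph1_early, Ph2_early by lra. set (s := Sg (t - t1 - 1)) in *.
      assert (kr^2 <= kp^2) by nra. assert (kp^2 <= 4*kr^2) by nra.
      assert (0 <= (kp^2 - kr^2) * (1 - s)) by (apply Rmult_le_pos; lra).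
      assert (th1 t1 t ^ 2 <= 36) by nra. assert (10000 <= kp) by lra.
      assert (100000000 <= kp^2) by nra. nra.
    + rewrite Sg_ge1 by lra. assert (kp^2/4 <= Ph1 kr kp t1 t ^ 2) by nra.
      assert (th1 t1 t ^ 2 <= 36) by nra. assert (10000 <= kp) by lra.
      assert (100000000 <= kp^2) by nra. nra.
  - set (s := Sg (t - t1 - 1)) in *.
    assert (kr^2 <= kp^2) by nra.
    assert (0 <= (kp^2 - kr^2) * s) by (apply Rmult_le_pos; lra).
    assert (Ph1 kr kp t1 t ^ 2 <= 9 * kp^2) by nra. assert (0 <= th1 t1 t ^ 2) by nra.
    assert (10000 <= kp) by lra. nra.
Qed.

Lemma d0_bnd' kr kp t1 t : hyp kr kp -> 6/25 <= d0 kr kp t1 t <= 11.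
Proof. intros Hh. pose proof (d0_bnd _ _ t1 t Hh) as [A B]. pose proof Hh as [H1 [H2 H3]].
  assert (0 < kp^2) by nra. split; nra. Qed.

Lemma mul_trig_bnd (a s1 s2 B : R) : Rabs a <= B -> Rabs s1 <= 1 -> Rabs s2 <= 1 -> Rabs (a * (s1 * s2)) <= B.
Proof. intros. rewrite !Rabs_mult. pose proof (Rabs_pos a). pose proof (Rabs_pos s1). pose proof (Rabs_pos s2).
  assert (Rabs s1 * Rabs s2 <= 1) by nra. nra. Qed.
Lemma abs_sin x : Rabs (sin x) <= 1. Proof. apply Rabs_le. apply SIN_bound. Qed.
Lemma abs_cos x : Rabs (cos x) <= 1. Proof. apply Rabs_le. apply COS_bound. Qed.

Lemma div_bnd a b B : 0 < b -> Rabs a <= B * b -> Rabs (a / b) <= B.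
Proof. intros Hb H. unfold Rdiv. rewrite Rabs_mult, Rabs_inv, (Rabs_right b) by lra.
  apply Rmult_le_reg_r with b; auto. field_simplify; lra. Qed.

Lemma A11_val kr kp t1 x y t : hyp kr kp -> 99/100 <= A11 kr kp t1 x y t <= 101/100.
Proof. intros Hh. pose proof Hh as [H1 [H2 H3]]. unfold A11, a0.
  pose proof (th1_bnd t1 t).
  assert (B : Rabs (WW kr t1 t / kr^2 * (cos (kr * x) * cos (kp * y))) <= 1/200).
  { apply mul_trig_bnd; try apply abs_cos. apply div_bnd. nra.
    pose proof (WW_bnd _ _ t1 t Hh). nra. }
  apply abs_inv in B.
  assert (0 <= th1 t1 t ^ 2 / kr ^ 2 <= 1/200).
  { split. apply Rdiv_le_0_compat; nra. apply Rmult_le_reg_r with (kr^2). nra.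
    field_simplify; nra. }
  lra. Qed.

Lemma A22_val kr kp t1 x y t : hyp kr kp -> 1/5 <= A22 kr kp t1 x y t <= 12.
Proof. intros Hh. pose proof Hh as [H1 [H2 H3]]. unfold A22.
  pose proof (d0_bnd' _ _ t1 t Hh).
  assert (B : Rabs (WW kr t1 t / kp^2 * (cos (kr * x) * cos (kp * y))) <= 1/200).
  { apply mul_trig_bnd; try apply abs_cos. apply div_bnd. nra.
    pose proof (WW_bnd _ _ t1 t Hh). nra. }
  apply abs_inv in B. lra. Qed.

Lemma ellip kr kp t1 : hyp kr kp -> forall x y t xi1 xi2,
  / 80 * (xi1 ^ 2 + xi2 ^ 2) <= quad (Am kr kp t1) x y t xi1 xi2 /\
  quad (Am kr kp t1) x y t xi1 xi2 <= 80 * (xi1 ^ 2 + xi2 ^ 2).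
Proof. intros Hh x y t xi1 xi2. unfold quad, Am; simpl.
  assert (E : A21 kr kp t1 x y t = - A12 kr kp t1 x y t) by (unfold A21, A12; ring).
  rewrite E. pose proof (A11_val _ _ t1 x y t Hh). pose proof (A22_val _ _ t1 x y t Hh).
  assert (0 <= xi1^2) by apply pow2_ge_0. assert (0 <= xi2^2) by apply pow2_ge_0.
  split; nra. Qed.

Lemma a01_bnd kr kp t1 t : hyp kr kp -> Rabs (a01 kr t1 t) <= 1/2.
Proof. intros Hh. pose proof Hh as [H1 [H2 H3]]. unfold a01.
  replace (- (2 * th1 t1 t * th2 t1 t) / kr ^ 2) with ((- (2 * th1 t1 t * th2 t1 t)) / kr ^ 2) by reflexivity.
  apply div_bnd. nra. pose proof (th1_bnd t1 t). pose proof (th2_bnd t1 t) as A. apply abs_inv in A.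
  apply Rabs_le. split; nra. Qed.

Lemma d01_bnd kr kp t1 t : hyp kr kp -> Rabs (d01 kr kp t1 t) <= 28.
Proof. intros Hh. pose proof Hh as [H1 [H2 H3]]. unfold d01.
  eapply Rle_trans. apply Rabs_triang.
  assert (A : Rabs ((kr ^ 2 / kp ^ 2 - 1) * S1 (t - t1 - 1)) <= 3).
  { rewrite Rabs_mult. pose proof (S1_bnd (t - t1 - 1)).
    assert (Rabs (kr ^ 2 / kp ^ 2 - 1) <= 1).
    { assert (0 <= kr^2/kp^2 <= 1). split. apply Rdiv_le_0_compat; nra.
      apply Rmult_le_reg_r with (kp^2). nra. field_simplify; nra. apply Rabs_le; lra. }
    rewrite (Rabs_right (S1 _)) by lra. pose proof (Rabs_pos (kr ^ 2 / kp ^ 2 - 1)). nra. }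
  assert (B : Rabs ((2 * Ph1 kr kp t1 t * Ph2 kr kp t1 t - Ph3 kr kp t1 t - 2 * th1 t1 t * th2 t1 t) / kp ^ 2) <= 25).
  { apply div_bnd. nra. pose proof (Ph1_lo _ _ t1 t Hh). pose proof (Ph1_hi _ _ t1 t Hh).
    pose proof (Ph2_bnd _ _ t1 t Hh) as P2. apply abs_inv in P2.
    pose proof (Ph3_bnd _ _ t1 t Hh) as P3. apply abs_inv in P3.
    pose proof (th1_bnd t1 t). pose proof (th2_bnd t1 t) as T2. apply abs_inv in T2.
    assert (10000 <= kp) by lra.
    assert (- 24 * kp^2 <= 2 * Ph1 kr kp t1 t * Ph2 kr kp t1 t <= 24 * kp^2) by (split; nra).
    assert (- 360 <= th1 t1 t * th2 t1 t <= 360) by (split; nra).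
    apply Rabs_le. split; nra. }
  lra. Qed.

Lemma tb_ss x y kr kp : Rabs (sin (kr * x) * sin (kp * y)) <= 1.
Proof. rewrite Rabs_mult. pose proof (abs_sin (kr*x)). pose proof (abs_sin (kp*y)).
  pose proof (Rabs_pos (sin (kr*x))). pose proof (Rabs_pos (sin (kp*y))). nra. Qed.

Lemma A11_part kr kp t1 : hyp kr kp -> bounded_partials (A11 kr kp t1) 60.
Proof. intros Hh. pose proof Hh as [H1 [H2 H3]]. assert (Hr : kr <> 0) by lra. assert (Hp : kp <> 0) by lra.
  intros x y t. pose proof (A11_C1d kr kp t1 Hr Hp) as C.
  rewrite (C1d_dx _ _ _ _ C), (C1d_dy _ _ _ _ C), (C1d_dt _ _ _ _ C).
  pose proof (WW_bnd _ _ t1 t Hh) as HW. split; [|split].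
  - replace (WW kr t1 t / kr ^ 2 * (kr * sin (kr * x) * cos (kp * y)))
      with (WW kr t1 t / kr * (sin (kr * x) * cos (kp * y))) by (field; auto).
    apply mul_trig_bnd; [|apply abs_sin|apply abs_cos]. apply div_bnd; nra.
  - replace (WW kr t1 t / kr ^ 2 * (kp * cos (kr * x) * sin (kp * y)))
      with (WW kr t1 t * kp / kr^2 * (cos (kr * x) * sin (kp * y))) by (field; auto).
    apply mul_trig_bnd; [|apply abs_cos|apply abs_sin]. apply div_bnd. nra.
    rewrite Rabs_mult, (Rabs_right kp) by lra. pose proof (Rabs_pos (WW kr t1 t)). nra.
  - eapply Rle_trans. unfold Rminus. apply Rabs_triang. rewrite Rabs_Ropp.
    pose proof (a01_bnd _ _ t1 t Hh).
    assert (Rabs (WW1 kr t1 t / kr ^ 2 * (cos (kr * x) * cos (kp * y))) <= 1/2).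
    { apply mul_trig_bnd; [|apply abs_cos|apply abs_cos]. apply div_bnd. nra.
      pose proof (WW1_bnd _ _ t1 t Hh). nra. }
    lra.
Qed.

Lemma A12_part kr kp t1 : hyp kr kp -> bounded_partials (A12 kr kp t1) 60.
Proof. intros Hh. pose proof Hh as [H1 [H2 H3]]. assert (Hr : kr <> 0) by lra. assert (Hp : kp <> 0) by lra.
  intros x y t. pose proof (A12_C1d kr kp t1 Hr Hp) as C.
  rewrite (C1d_dx _ _ _ _ C), (C1d_dy _ _ _ _ C), (C1d_dt _ _ _ _ C).
  pose proof (WW_bnd _ _ t1 t Hh) as HW. split; [|split].
  - replace (2 * WW kr t1 t / (kr * kp) * (kr * cos (kr * x) * sin (kp * y)))
      with (2 * WW kr t1 t / kp * (cos (kr * x) * sin (kp * y))) by (field; auto).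
    apply mul_trig_bnd; [|apply abs_cos|apply abs_sin]. apply div_bnd. lra.
    rewrite Rabs_mult, (Rabs_right 2) by lra. nra.
  - replace (2 * WW kr t1 t / (kr * kp) * (kp * sin (kr * x) * cos (kp * y)))
      with (2 * WW kr t1 t / kr * (sin (kr * x) * cos (kp * y))) by (field; auto).
    apply mul_trig_bnd; [|apply abs_sin|apply abs_cos]. apply div_bnd. lra.
    rewrite Rabs_mult, (Rabs_right 2) by lra. nra.
  - apply mul_trig_bnd; [|apply abs_sin|apply abs_sin]. apply div_bnd. nra.
    rewrite Rabs_mult, (Rabs_right 2) by lra. pose proof (WW1_bnd _ _ t1 t Hh). nra.
Qed.

Lemma A21_part kr kp t1 : hyp kr kp -> bounded_partials (A21 kr kp t1) 60.
Proof. intros Hh. pose proof Hh as [H1 [H2 H3]]. assert (Hr : kr <> 0) by lra. assert (Hp : kp <> 0) by lra.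
  intros x y t. pose proof (A21_C1d kr kp t1 Hr Hp) as C.
  rewrite (C1d_dx _ _ _ _ C), (C1d_dy _ _ _ _ C), (C1d_dt _ _ _ _ C).
  pose proof (WW_bnd _ _ t1 t Hh) as HW. split; [|split].
  - replace (- (2 * WW kr t1 t / (kr * kp)) * (kr * cos (kr * x) * sin (kp * y)))
      with ((- (2 * WW kr t1 t)) / kp * (cos (kr * x) * sin (kp * y))) by (field; auto).
    apply mul_trig_bnd; [|apply abs_cos|apply abs_sin]. apply div_bnd. lra.
    rewrite Rabs_Ropp, Rabs_mult, (Rabs_right 2) by lra. nra.
  - replace (- (2 * WW kr t1 t / (kr * kp)) * (kp * sin (kr * x) * cos (kp * y)))
      with ((- (2 * WW kr t1 t)) / kr * (sin (kr * x) * cos (kp * y))) by (field; auto).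
    apply mul_trig_bnd; [|apply abs_sin|apply abs_cos]. apply div_bnd. lra.
    rewrite Rabs_Ropp, Rabs_mult, (Rabs_right 2) by lra. nra.
  - replace (- (2 * WW1 kr t1 t / (kr * kp)) * (sin (kr * x) * sin (kp * y)))
      with ((- (2 * WW1 kr t1 t)) / (kr * kp) * (sin (kr * x) * sin (kp * y))) by (field; auto).
    apply mul_trig_bnd; [|apply abs_sin|apply abs_sin]. apply div_bnd. nra.
    rewrite Rabs_Ropp, Rabs_mult, (Rabs_right 2) by lra. pose proof (WW1_bnd _ _ t1 t Hh). nra.
Qed.

Lemma A22_part kr kp t1 : hyp kr kp -> bounded_partials (A22 kr kp t1) 60.
Proof. intros Hh. pose proof Hh as [H1 [H2 H3]]. assert (Hr : kr <> 0) by lra. assert (Hp : kp <> 0) by lra.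
  intros x y t. pose proof (A22_C1d kr kp t1 Hr Hp) as C.
  rewrite (C1d_dx _ _ _ _ C), (C1d_dy _ _ _ _ C), (C1d_dt _ _ _ _ C).
  pose proof (WW_bnd _ _ t1 t Hh) as HW. split; [|split].
  - replace (WW kr t1 t / kp ^ 2 * (- (kr * sin (kr * x)) * cos (kp * y)))
      with ((- (WW kr t1 t * kr)) / kp^2 * (sin (kr * x) * cos (kp * y))) by (field; auto).
    apply mul_trig_bnd; [|apply abs_sin|apply abs_cos]. apply div_bnd. nra.
    rewrite Rabs_Ropp, Rabs_mult, (Rabs_right kr) by lra. pose proof (Rabs_pos (WW kr t1 t)). nra.
  - replace (WW kr t1 t / kp ^ 2 * (cos (kr * x) * - (kp * sin (kp * y))))
      with ((- WW kr t1 t) / kp * (cos (kr * x) * sin (kp * y))) by (field; auto).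
    apply mul_trig_bnd; [|apply abs_cos|apply abs_sin]. apply div_bnd. lra.
    rewrite Rabs_Ropp. nra.
  - eapply Rle_trans. apply Rabs_triang.
    pose proof (d01_bnd _ _ t1 t Hh).
    assert (Rabs (WW1 kr t1 t / kp ^ 2 * (cos (kr * x) * cos (kp * y))) <= 1/2).
    { apply mul_trig_bnd; [|apply abs_cos|apply abs_cos]. apply div_bnd. nra.
      pose proof (WW1_bnd _ _ t1 t Hh). nra. }
    lra.
Qed.

Lemma regA kr kp t1 : hyp kr kp -> reg_class 80 60 (Am kr kp t1).
Proof. intros Hh. pose proof Hh as [H1 [H2 H3]]. split. apply ellip; auto.
  split. apply A_C1; lra. unfold Am; simpl.
  split; [apply A11_part|split; [apply A12_part|split; [apply A21_part|apply A22_part]]]; auto. Qed.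


Lemma exp_le x y : x <= y -> exp x <= exp y.
Proof. intros [H|H]. left; apply exp_increasing; auto. subst; lra. Qed.

Lemma Ph_lower kr kp t1 t : hyp kr kp -> t1 <= t -> kr * t1 + kp / 2 * (t - t1) <= Ph kr kp t1 t.
Proof. intros Hh Ht. destruct Ht as [Ht|Ht].
  - destruct (MVT_cor3 (Ph kr kp t1) (Ph1 kr kp t1) t1 t Ht) as [c [Hc1 [Hc2 E]]].
    { intros z _ _. apply is_derive_Reals. apply Ph_d. }
    rewrite E. rewrite Ph_early by lra. pose proof (Ph1_lo _ _ t1 c Hh).
    assert (0 <= t - t1) by lra. nra.
  - subst. rewrite Ph_early by lra. lra.
Qed.

Lemma E_bnd c1 c2 kr kp t1 t : hyp kr kp -> t1 <= t -> 0 < c1 ->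
  c1 * exp (- kr / 2 + 5 * kp / 6) * exp (- kr * t1) = c2 * exp (- kp * t1) ->
  c1 * exp (- Ph kr kp t1 t) <= c2 * exp (- kp * t / 3) * exp (- 2 * kp * t1 / 3).
Proof. intros Hh Ht Hc E. pose proof Hh as [H1 [H2 H3]].
  assert (C2 : c2 = c1 * exp (- kr / 2 + 5 * kp / 6) * exp (- kr * t1) * exp (kp * t1)).
  { rewrite E. rewrite Rmult_assoc, <- exp_plus. replace (- kp * t1 + kp * t1) with 0 by ring.
    rewrite exp_0; ring. }
  rewrite C2. rewrite !Rmult_assoc. apply Rmult_le_compat_l. lra.
  rewrite <- !exp_plus. apply exp_le. pose proof (Ph_lower _ _ t1 t Hh Ht).
  assert (0 <= t - t1) by lra. nra.
Qed.

Lemma Rpow_ge kr (a : nat) : 1 <= kr -> kr ^ a <= Rpower kr (7 * INR a / 3).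
Proof. intros H. rewrite <- Rpower_pow by lra. apply Rle_Rpower; auto.
  pose proof (pos_INR a). lra. Qed.

Lemma Dn_ff c1 kr kp t1 (a : nat) t : (a <= 2)%nat ->
  Derive_n (ff c1 kr kp t1) a t = match a with 0 => ff c1 kr kp t1 t | 1 => ff1 c1 kr kp t1 t | _ => ff2 c1 kr kp t1 t end.
Proof. intros Ha. destruct a as [|[|[|a]]]; simpl.
  - auto. - apply D_ff.
  - rewrite (Derive_ext (fun t => Derive (ff c1 kr kp t1) t) (ff1 c1 kr kp t1)). apply D_ff1. intros; apply D_ff.
  - lia. Qed.
Lemma Dn_gg c1 kr kp t1 (a : nat) t : (a <= 2)%nat ->
  Derive_n (gg c1 kr kp t1) a t = match a with 0 => gg c1 kr kp t1 t | 1 => gg1 c1 kr kp t1 t | _ => gg2 c1 kr kp t1 t end.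
Proof. intros Ha. destruct a as [|[|[|a]]]; simpl.
  - auto. - apply D_gg.
  - rewrite (Derive_ext (fun t => Derive (gg c1 kr kp t1) t) (gg1 c1 kr kp t1)). apply D_gg1. intros; apply D_gg.
  - lia. Qed.

Lemma abs_fac (E X B : R) : 0 <= E -> Rabs X <= B -> Rabs (E * X) <= E * B.
Proof. intros. rewrite Rabs_mult, Rabs_right by lra. apply Rmult_le_compat_l; lra. Qed.

Lemma f_bnd c1 kr kp t1 (a : nat) t : hyp kr kp -> 0 < c1 -> (a <= 2)%nat ->
  Rabs (Derive_n (ff c1 kr kp t1) a t) <= 1000 * c1 * Rpower kr (7 * INR a / 3) * exp (- kr * t).
Proof. intros Hh Hc Ha. pose proof Hh as [H1 [H2 H3]].
  assert (Hp : 0 < exp (- kr * t)) by apply exp_pos.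
  apply Rle_trans with (1000 * c1 * kr ^ a * exp (- kr * t)).
  2:{ apply Rmult_le_compat_r; [lra|]. apply Rmult_le_compat_l; [lra|]. apply Rpow_ge; lra. }
  rewrite Dn_ff by auto.
  pose proof (th1_bnd t1 t). pose proof (th2_bnd t1 t) as T2. apply abs_inv in T2.
  pose proof (COS_bound (th t1 t)). pose proof (SIN_bound (th t1 t)).
  destruct (Rle_dec (t - t1) 5).
  - assert (EE : exp (- Ph kr kp t1 t) = exp (- kr * t)) by (rewrite Ph_early by lra; f_equal; ring).
    set (E := c1 * exp (- kr * t)).
    assert (0 < E) by (unfold E; nra).
    destruct a as [|[|[|a]]]; [| | |lia].
    + unfold ff. rewrite EE. fold E. simpl. eapply Rle_trans. apply abs_fac with (B := 1). lra.
      apply Rabs_le; lra. unfold E; nra.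
    + unfold ff1. rewrite EE, Ph1_early by lra. fold E.
      eapply Rle_trans. apply abs_fac with (B := kr + 6). lra.
      assert (- kr <= kr * cos (th t1 t) <= kr) by (split; nra).
      assert (- 6 <= th1 t1 t * sin (th t1 t) <= 6) by (split; nra).
      apply Rabs_le; split; nra. simpl.
      replace (1000 * c1 * (kr * 1) * exp (- kr * t)) with (E * (1000 * kr)) by (unfold E; ring).
      apply Rmult_le_compat_l; lra.
    + unfold ff2, ff, gg, Qf, Wt. rewrite EE, Ph1_early, Ph2_early by lra. fold E.
      replace ((kr ^ 2 - 0 - th1 t1 t ^ 2) * (E * cos (th t1 t)) + (2 * kr * th1 t1 t - th2 t1 t) * (E * sin (th t1 t)))
        with (E * ((kr ^ 2 - th1 t1 t ^ 2) * cos (th t1 t) + (2 * kr * th1 t1 t - th2 t1 t) * sin (th t1 t))) by ring.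
      eapply Rle_trans. apply abs_fac with (B := kr^2 + 36 + 12 * kr + 60). lra.
      assert (0 <= th1 t1 t ^ 2 <= 36) by (split; nra).
      assert (- (kr^2) <= kr^2 * cos (th t1 t) <= kr^2) by (split; nra).
      assert (- 36 <= th1 t1 t ^ 2 * cos (th t1 t) <= 36) by (split; nra).
      assert (0 <= kr * th1 t1 t <= 6 * kr) by (split; nra).
      assert (- (6*kr) <= kr * th1 t1 t * sin (th t1 t) <= 6 * kr) by (split; nra).
      assert (- 60 <= th2 t1 t * sin (th t1 t) <= 60) by (split; nra).
      apply Rabs_le; split; nra. simpl.
      replace (1000 * c1 * (kr * (kr * 1)) * exp (- kr * t)) with (E * (1000 * kr^2)) by (unfold E; ring).
      apply Rmult_le_compat_l. lra. nra.
  - assert (0 < c1 * exp (- kr * t) * kr ^ a) by (apply Rmult_lt_0_compat; [nra|apply pow_lt; lra]).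
    assert (Z : match a with 0 => ff c1 kr kp t1 t | 1 => ff1 c1 kr kp t1 t | _ => ff2 c1 kr kp t1 t end = 0).
    { unfold ff2, ff1, ff, gg, Wt. rewrite th_late, th1_late, th2_late by lra. rewrite cos_PI2.
      destruct a as [|[|a]]; ring. }
    rewrite Z, Rabs_R0. nra.
Qed.

Lemma g_bnd c1 c2 kr kp t1 (a : nat) t : hyp kr kp -> 0 < c1 -> (a <= 2)%nat -> t1 <= t ->
  c1 * exp (- kr / 2 + 5 * kp / 6) * exp (- kr * t1) = c2 * exp (- kp * t1) ->
  Rabs (Derive_n (gg c1 kr kp t1) a t) <= 1000 * c2 * kp ^ a * exp (- kp * t / 3) * exp (- 2 * kp * t1 / 3).
Proof. intros Hh Hc Ha Ht HE. pose proof Hh as [H1 [H2 H3]].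
  pose proof (E_bnd c1 c2 kr kp t1 t Hh Ht Hc HE) as EB.
  set (E := c1 * exp (- Ph kr kp t1 t)) in *.
  assert (0 < E) by (unfold E; pose proof (exp_pos (- Ph kr kp t1 t)); nra).
  assert (0 < kp ^ a) by (apply pow_lt; lra).
  apply Rle_trans with (E * (10 * kp ^ a)).
  2:{ replace (1000 * c2 * kp ^ a * exp (- kp * t / 3) * exp (- 2 * kp * t1 / 3))
        with (1000 * kp ^ a * (c2 * exp (- kp * t / 3) * exp (- 2 * kp * t1 / 3))) by ring. nra. }
  rewrite Dn_gg by auto.
  pose proof (th1_bnd t1 t). pose proof (th2_bnd t1 t) as T2. apply abs_inv in T2.
  pose proof (COS_bound (th t1 t)). pose proof (SIN_bound (th t1 t)).
  pose proof (Ph1_lo _ _ t1 t Hh). pose proof (Ph1_hi _ _ t1 t Hh).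
  pose proof (Ph2_bnd _ _ t1 t Hh) as P2. apply abs_inv in P2.
  destruct a as [|[|[|a]]]; [| | |lia]; simpl.
  - unfold gg. fold E. apply abs_fac. lra. apply Rabs_le; lra.
  - unfold gg1. fold E. apply abs_fac. lra. apply Rabs_le; split; nra.
  - unfold gg2, gg, ff, Qf, Wt. fold E.
    replace ((Ph1 kr kp t1 t ^ 2 - Ph2 kr kp t1 t - th1 t1 t ^ 2) * (E * sin (th t1 t)) -
      (2 * Ph1 kr kp t1 t * th1 t1 t - th2 t1 t) * (E * cos (th t1 t)))
      with (E * ((Ph1 kr kp t1 t ^ 2 - Ph2 kr kp t1 t - th1 t1 t ^ 2) * sin (th t1 t) -
      (2 * Ph1 kr kp t1 t * th1 t1 t - th2 t1 t) * cos (th t1 t))) by ring.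
    apply abs_fac. lra.
    assert (0 <= Ph1 kr kp t1 t ^ 2 <= 9 * kp^2) by (split; nra).
    assert (0 <= Ph1 kr kp t1 t * th1 t1 t <= 18 * kp) by (split; nra).
    assert (0 <= th1 t1 t ^ 2 <= 36) by (split; nra).
    assert (10000 <= kp) by lra.
    set (Pq := Ph1 kr kp t1 t ^ 2 - Ph2 kr kp t1 t - th1 t1 t ^ 2).
    set (Pw := 2 * Ph1 kr kp t1 t * th1 t1 t - th2 t1 t).
    assert (Rabs Pq <= 9 * kp^2 + 4 * kp + 36) by (apply Rabs_le; unfold Pq; split; nra).
    assert (Rabs Pw <= 36 * kp + 60) by (apply Rabs_le; unfold Pw; split; nra).
    eapply Rle_trans. unfold Rminus. apply Rabs_triang. rewrite Rabs_Ropp, !Rabs_mult.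
    pose proof (abs_sin (th t1 t)). pose proof (abs_cos (th t1 t)).
    pose proof (Rabs_pos Pq). pose proof (Rabs_pos Pw).
    assert (Rabs Pq * Rabs (sin (th t1 t)) <= Rabs Pq) by nra.
    assert (Rabs Pw * Rabs (cos (th t1 t)) <= Rabs Pw) by nra.
    nra.
Qed.


Theorem mainTheorem8 :
  exists C K M : R, 2 <= C /\
  forall (k k' : Z) (t1 c1 : R),
    K <= IZR k -> (k < k')%Z -> (k' <= 2 * k)%Z -> 0 <= t1 -> 0 < c1 ->
    let c := exp (- IZR k / 2 + 5 * IZR k' / 6) in
    forall c2 : R, 0 < c2 ->
    c1 * c * exp (- IZR k * t1) = c2 * exp (- IZR k' * t1) ->
    exists (u : field3) (A : matfield) (f g : R -> R),
      transforms (fun x y t => c1 * cos (IZR k * x) * exp (- IZR k * t))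
                 (fun x y t => c2 * cos (IZR k' * y) * exp (- IZR k' * t))
                 t1 (t1 + C) A u /\
      reg_class 80 60 A /\
      C2_1 f /\ C2_1 g /\
      (forall x y t, t1 <= t <= t1 + C ->
         u x y t = f t * cos (IZR k * x) + g t * cos (IZR k' * y)) /\
      (forall (a : nat) (t : R), (a <= 2)%nat -> t1 <= t <= t1 + C ->
         Rabs (Derive_n f a t)
           <= M * c1 * Rpower (IZR k) (7 * INR a / 3) * exp (- IZR k * t) /\
         Rabs (Derive_n g a t)
           <= M * c2 * IZR k' ^ a * exp (- IZR k' * t / 3)
              * exp (- 2 * IZR k' * t1 / 3)) /\
      (forall x y t, t1 <= t <= t1 + / 100 ->
         u x y t = c1 * cos (IZR k * x) * exp (- IZR k * t) /\ is_Id_at A x y t) /\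
      (forall x y t, t1 + C - / 100 <= t <= t1 + C ->
         u x y t = c2 * cos (IZR k' * y) * exp (- IZR k' * t) /\ is_Id_at A x y t).
Proof.
  exists 27, 10000, 1000. split. lra.
  intros k k' t1 c1 HK Hlt Hle Ht1 Hc1 c c2 Hc2 HE. unfold c in HE.
  assert (Hh : hyp (IZR k) (IZR k')).
  { split; [auto|split]. apply IZR_lt; auto. rewrite <- mult_IZR. apply IZR_le; auto. }
  pose proof Hh as [H1 [H2 H3]].
  assert (Hr : IZR k <> 0) by lra. assert (Hp : IZR k' <> 0) by lra.
  assert (Zk : (0 <= k)%Z) by (apply le_IZR; lra).
  assert (Zk' : (0 <= k')%Z) by (apply le_IZR; lra).
  exists (uF c1 (IZR k) (IZR k') t1), (Am (IZR k) (IZR k') t1),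
    (ff c1 (IZR k) (IZR k') t1), (gg c1 (IZR k) (IZR k') t1).
  split; [|split; [|split; [|split; [|split; [|split; [|split]]]]]].
  - unfold transforms. split; [apply u_per; auto|].
    split; [apply A_per; auto|]. split; [apply u_C2|]. split; [apply A_C1; auto|].
    split; [apply solves; auto|]. split.
    + intros x y t Ht. split. apply early_u; lra. apply early_Id; auto; lra.
    + intros x y t Ht. split. apply late_u; auto; lra. apply late_Id; auto; lra.
  - apply regA; auto.
  - apply C21_ff.
  - apply C21_gg.
  - intros; reflexivity.
  - intros a t Ha Ht. split. apply f_bnd; auto. apply g_bnd; auto. lra.
  - intros x y t Ht. split. apply early_u; lra. apply early_Id; auto; lra.
  - intros x y t Ht. split. apply late_u; auto; lra. apply late_Id; auto; lra.
Qed.
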